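(* Let $0<p\le1$. If $(\mathcal{H},\|\cdot\|_{\mathcal{H}})$ is a $p$-normed (resp. $p$-Banach) multilinear hyper-ideal, then $(\mathcal{P}^{\mathcal{H}},\|\cdot\|_{\mathcal{P}^{\mathcal{H}}})$ is a $p$-normed (resp. $p$-Banach) polynomial $(C_m)_{m=1}^\infty$-hyper-ideal with $C_m=\frac{m^m}{m!}$; in particular, for $t\in\mathcal{L}(F;H)$, $P\in\mathcal{P}^{\mathcal{H}}(^nE;F)$ and $R\in\mathcal{P}(^mG;E)$ one has $t\circ P\circ R\in\mathcal{P}^{\mathcal{H}}(^{mn}G;H)$ and $\|t\circ P\circ R\|_{\mathcal{P}^{\mathcal{H}}}\le\left(\frac{m^m}{m!}\right)^n\|t\|\,\|P\|_{\mathcal{P}^{\mathcal{H}}}\|R\|^n$.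
   Context: All spaces are Banach spaces over $\mathbb{K}=\mathbb{R}$ or $\mathbb{C}$. A $p$-normed multilinear hyper-ideal is a class $\mathcal{H}$ of continuous multilinear maps with a function $\|\cdot\|_{\mathcal{H}}$ such that each component $\mathcal{H}(E_1,\dots,E_n;F)$ is a linear subspace of $\mathcal{L}(E_1,\dots,E_n;F)$ containing the finite-type maps on which $\|\cdot\|_{\mathcal{H}}$ is a $p$-norm, $\|I_n\|_{\mathcal{H}}=1$ for $I_n(\lambda_1,\dots,\lambda_n)=\lambda_1\cdots\lambda_n$, and (hyper-ideal property) whenever $A\in\mathcal{H}(E_1,\dots,E_n;F)$, $B_j\in\mathcal{L}(G_{j,1},\dots,G_{j,m_j};E_j)$ for $j=1,\dots,n$ and $t\in\mathcal{L}(F;H)$, then $t\circ A\circ(B_1,\dots,B_n)\in\mathcal{H}$ with $\|t\circ A\circ(B_1,\dots,B_n)\|_{\mathcal{H}}\le\|t\|\|A\|_{\mathcal{H}}\|B_1\|\cdots\|B_n\|$; $p$-Banach means the components are complete. For $A\in\mathcal{L}(^nE;F)$, $\widehat A(x)=A(x,\dots,x)$. $\mathcal{P}^{\mathcal{H}}(^nE;F)=\{P\in\mathcal{P}(^nE;F):P=\widehat A\text{ for some }A\in\mathcal{H}(^nE;F)\}$ and $\|P\|_{\mathcal{P}^{\mathcal{H}}}=\inf\{\|A\|_{\mathcal{H}}:A\in\mathcal{H},\ \widehat A=P\}$. A $p$-normed polynomial $(C_m)_{m=1}^\infty$-hyper-ideal ($C_m\ge1$, $C_1=1$) is a class $\mathcal{Q}$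 of homogeneous polynomials with a function $\|\cdot\|_{\mathcal{Q}}$ such that each $\mathcal{Q}(^nE;F)$ is a subspace of $\mathcal{P}(^nE;F)$ containing the finite-type polynomials (linear combinations of $x\mapsto\varphi(x)^ny$), $\|\cdot\|_{\mathcal{Q}}$ is a $p$-norm on it, $\|\lambda\mapsto\lambda^n\|_{\mathcal{Q}}=1$, and for $P\in\mathcal{Q}(^nE;F)$, $Q\in\mathcal{P}(^mG;E)$, $t\in\mathcal{L}(F;H)$: $t\circ P\circ Q\in\mathcal{Q}(^{mn}G;H)$ and $\|t\circ P\circ Q\|_{\mathcal{Q}}\le(C_m)^n\|t\|\|P\|_{\mathcal{Q}}\|Q\|^n$. When all $C_m=1$ it is called a polynomial hyper-ideal; $p$-Banach means complete components. *)

(* Defs.v *)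
From Stdlib Require Import Reals Factorial Lra Lia Classical ClassicalEpsilon FunctionalExtensionality.
Open Scope R_scope.


Inductive fkind := KReal | KComplex.

Definition Kt (k : fkind) : Type :=
  match k with KReal => R | KComplex => (R * R)%type end.

Definition Kzero (k : fkind) : Kt k :=
  match k return Kt k with KReal => 0 | KComplex => (0, 0) end.
Definition Kone (k : fkind) : Kt k :=
  match k return Kt k with KReal => 1 | KComplex => (1, 0) end.
Definition Kadd (k : fkind) : Kt k -> Kt k -> Kt k :=
  match k return Kt k -> Kt k -> Kt k with
  | KReal => Rplus
  | KComplex => fun x y => (fst x + fst y, snd x + snd y) end.
Definition Kmul (k : fkind) : Kt k -> Kt k -> Kt k :=
  match k return Kt k -> Kt k -> Kt k with
  | KReal => Rmult
  | KComplex => fun x y => (fst x * fst y - snd x * snd y,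
                           fst x * snd y + snd x * fst y) end.
Definition Kopp (k : fkind) : Kt k -> Kt k :=
  match k return Kt k -> Kt k with
  | KReal => Ropp
  | KComplex => fun x => (- fst x, - snd x) end.
Definition Kabs (k : fkind) : Kt k -> R :=
  match k return Kt k -> R with
  | KReal => Rabs
  | KComplex => fun x => sqrt (fst x * fst x + snd x * snd x) end.
Arguments Kadd {k}.
Arguments Kmul {k}.
Arguments Kopp {k}.
Arguments Kabs {k}.
Fixpoint Kpow {k : fkind} (x : Kt k) (n : nat) : Kt k :=
  match n with O => Kone k | S n' => Kmul (Kpow x n') x end.

Definition Idx (n : nat) : Type := {i : nat | (i < n)%nat}.

Definition widen {n : nat} (i : Idx n) : Idx (S n) :=
  exist _ (proj1_sig i) (le_S _ _ (proj2_sig i)).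
Definition lastI (n : nat) : Idx (S n) := exist _ n (le_n (S n)).

Fixpoint iprod {T : Type} (one : T) (mul : T -> T -> T) {n : nat}
  : (Idx n -> T) -> T :=
  match n return (Idx n -> T) -> T with
  | O => fun _ => one
  | S n' => fun f => mul (iprod one mul (fun i => f (widen i))) (f (lastI n'))
  end.

Fixpoint psum (m : nat -> nat) (j : nat) : nat :=
  match j with O => O | S j' => (psum m j' + m j')%nat end.

Lemma psum_mono (m : nat -> nat) {a b : nat} : (a <= b)%nat -> (psum m a <= psum m b)%nat.
Proof. induction 1; simpl; lia. Qed.

Lemma flat_lt (m : nat -> nat) (n : nat) (j : Idx n) (l : Idx (m (proj1_sig j))) :
  (psum m (proj1_sig j) + proj1_sig l < psum m n)%nat.
Proof.
  destruct j as [j hj]; destruct l as [l hl]; simpl in *.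
  pose proof (psum_mono m (a:=S j) (b:=n) hj). simpl in H. lia.
Qed.

(* position of the l-th argument of the j-th block inside the concatenated
   list of arguments (G_{1,1},...,G_{1,m_1},...,G_{n,1},...,G_{n,m_n}) *)
Definition flat (m : nat -> nat) (n : nat) (j : Idx n) (l : Idx (m (proj1_sig j)))
  : Idx (psum m n) :=
  exist _ (psum m (proj1_sig j) + proj1_sig l)%nat (flat_lt m n j l).

(* Suprema / infima of real sets (0 by convention if not defined)      *)
Definition Rsup (E : R -> Prop) : R :=
  match excluded_middle_informative (bound E /\ exists x, E x) with
  | left h => proj1_sig (completeness E (proj1 h) (proj2 h))
  | right _ => 0
  end.
Definition Rinf (E : R -> Prop) : R := - Rsup (fun x => E (- x)).

Definition rpow (x p : R) : R := if Rle_dec x 0 then 0 else Rpower x p.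

Record Space (k : fkind) := mkSpace {
  car :> Type;
  vzero : car;
  vadd : car -> car -> car;
  vopp : car -> car;
  vscal : Kt k -> car -> car;
  vnorm : car -> R }.
Arguments car {k}.
Arguments vzero {k} s.
Arguments vadd {k s}.
Arguments vopp {k s}.
Arguments vscal {k s}.
Arguments vnorm {k s}.

Definition vsub {k} {E : Space k} (x y : E) : E := vadd x (vopp y).

Definition Banach {k} (E : Space k) : Prop :=
  (forall x y z : E, vadd x (vadd y z) = vadd (vadd x y) z) /\
  (forall x y : E, vadd x y = vadd y x) /\
  (forall x : E, vadd x (vzero E) = x) /\
  (forall x : E, vadd x (vopp x) = vzero E) /\
  (forall (a b : Kt k) (x : E), vscal a (vscal b x) = vscal (Kmul a b) x) /\
  (forall x : E, vscal (Kone k) x = x) /\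
  (forall (a : Kt k) (x y : E), vscal a (vadd x y) = vadd (vscal a x) (vscal a y)) /\
  (forall (a b : Kt k) (x : E), vscal (Kadd a b) x = vadd (vscal a x) (vscal b x)) /\
  (forall x : E, 0 <= vnorm x) /\
  (forall x : E, vnorm x = 0 -> x = vzero E) /\
  (forall (a : Kt k) (x : E), vnorm (vscal a x) = Kabs a * vnorm x) /\
  (forall x y : E, vnorm (vadd x y) <= vnorm x + vnorm y) /\
  (forall u : nat -> E,
     (forall eps, 0 < eps -> exists N, forall i j, (N <= i)%nat -> (N <= j)%nat ->
        vnorm (vsub (u i) (u j)) < eps) ->
     exists x : E, forall eps, 0 < eps -> exists N, forall i, (N <= i)%nat ->
        vnorm (vsub (u i) x) < eps).

Definition Kspace (k : fkind) : Space k :=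
  @mkSpace k (Kt k) (Kzero k) (@Kadd k) (@Kopp k) (@Kmul k) (@Kabs k).

Definition is_linear {k} {E F : Space k} (t : E -> F) : Prop :=
  forall (x y : E) (a : Kt k), t (vadd x (vscal a y)) = vadd (t x) (vscal a (t y)).
Definition is_cont {k} {E F : Space k} (t : E -> F) : Prop :=
  forall (x : E) eps, 0 < eps -> exists d, 0 < d /\
    forall y : E, vnorm (vsub y x) < d -> vnorm (vsub (t y) (t x)) < eps.
Definition clin {k} {E F : Space k} (t : E -> F) : Prop := is_linear t /\ is_cont t.
Definition opnorm {k} {E F : Space k} (t : E -> F) : R :=
  Rsup (fun r => exists x : E, vnorm x <= 1 /\ r = vnorm (t x)).

Definition MLmap {k} {n : nat} (Es : Idx n -> Space k) (F : Space k) : Type :=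
  (forall i : Idx n, car (Es i)) -> car F.

Definition is_multilinear {k n} {Es : Idx n -> Space k} {F : Space k}
  (A : MLmap Es F) : Prop :=
  forall (i : Idx n) (x y z : forall j, car (Es j)) (a : Kt k),
    (forall j, j <> i -> x j = z j /\ y j = z j) ->
    z i = vadd (x i) (vscal a (y i)) ->
    A z = vadd (A x) (vscal a (A y)).

Definition is_cont_ml {k n} {Es : Idx n -> Space k} {F : Space k}
  (A : MLmap Es F) : Prop :=
  forall (x : forall j, car (Es j)) eps, 0 < eps -> exists d, 0 < d /\
    forall y : forall j, car (Es j),
      (forall j, vnorm (vsub (y j) (x j)) < d) -> vnorm (vsub (A y) (A x)) < eps.

Definition cml {k n} {Es : Idx n -> Space k} {F : Space k} (A : MLmap Es F) : Prop :=
  is_multilinear A /\ is_cont_ml A.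

Definition mlnorm {k n} {Es : Idx n -> Space k} {F : Space k} (A : MLmap Es F) : R :=
  Rsup (fun r => exists x : forall j, car (Es j),
          (forall j, vnorm (x j) <= 1) /\ r = vnorm (A x)).

Fixpoint vsumn {k} {F : Space k} (m : nat) (f : nat -> F) : F :=
  match m with O => vzero F | S m' => vadd (vsumn m' f) (f m') end.

Definition finite_type_ml {k n} {Es : Idx n -> Space k} {F : Space k}
  (A : MLmap Es F) : Prop :=
  exists (m : nat) (phi : nat -> forall i : Idx n, car (Es i) -> Kt k) (y : nat -> car F),
    (forall l i, @clin k (Es i) (Kspace k) (phi l i)) /\
    forall x, A x = vsumn m (fun l => vscal (iprod (Kone k) (@Kmul k) (fun i => phi l i (x i))) (y l)).

Definition In (k : fkind) (n : nat) : MLmap (fun _ : Idx n => Kspace k) (Kspace k) :=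
  fun x => iprod (Kone k) (@Kmul k) x.

Definition ml_zero {k n} {Es : Idx n -> Space k} {F : Space k} : MLmap Es F :=
  fun _ => vzero F.
Definition ml_add {k n} {Es : Idx n -> Space k} {F : Space k} (A B : MLmap Es F) : MLmap Es F :=
  fun x => vadd (A x) (B x).
Definition ml_scal {k n} {Es : Idx n -> Space k} {F : Space k} (a : Kt k) (A : MLmap Es F)
  : MLmap Es F := fun x => vscal a (A x).

Definition is_poly {k} (n : nat) {E F : Space k} (P : E -> F) : Prop :=
  exists A : MLmap (fun _ : Idx n => E) F, cml A /\ forall x, P x = A (fun _ => x).

Definition pnorm {k} {E F : Space k} (P : E -> F) : R :=
  Rsup (fun r => exists x : E, vnorm x <= 1 /\ r = vnorm (P x)).

Definition finite_type_poly {k} (n : nat) {E F : Space k} (P : E -> F) : Prop :=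
  exists (m : nat) (phi : nat -> E -> Kt k) (y : nat -> car F),
    (forall l, @clin k E (Kspace k) (phi l)) /\
    forall x, P x = vsumn m (fun l => vscal (Kpow (phi l x) n) (y l)).

Definition fn_zero {k} {E F : Space k} : E -> F := fun _ => vzero F.
Definition fn_add {k} {E F : Space k} (P Q : E -> F) : E -> F := fun x => vadd (P x) (Q x).
Definition fn_scal {k} {E F : Space k} (a : Kt k) (P : E -> F) : E -> F :=
  fun x => vscal a (P x).

Definition pnormed_subspace {k : fkind} {X : Type} (zero : X) (add : X -> X -> X)
  (scal : Kt k -> X -> X) (S : X -> Prop) (N : X -> R) (p : R) : Prop :=
  S zero /\
  (forall A B, S A -> S B -> S (add A B)) /\
  (forall a A, S A -> S (scal a A)) /\
  (forall A, S A -> 0 <= N A) /\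
  (forall A, S A -> (N A = 0 <-> A = zero)) /\
  (forall a A, S A -> N (scal a A) = Kabs a * N A) /\
  (forall A B, S A -> S B -> rpow (N (add A B)) p <= rpow (N A) p + rpow (N B) p).

Definition complete_subspace {k : fkind} {X : Type} (add : X -> X -> X)
  (scal : Kt k -> X -> X) (S : X -> Prop) (N : X -> R) : Prop :=
  let sub := fun A B => add A (scal (Kopp (Kone k)) B) in
  forall u : nat -> X, (forall i, S (u i)) ->
    (forall eps, 0 < eps -> exists M, forall i j, (M <= i)%nat -> (M <= j)%nat ->
        N (sub (u i) (u j)) < eps) ->
    exists A, S A /\ forall eps, 0 < eps -> exists M, forall i, (M <= i)%nat ->
        N (sub (u i) A) < eps.

Definition MLclass (k : fkind) : Type :=
  forall (n : nat) (Es : Idx n -> Space k) (F : Space k), MLmap Es F -> Prop.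
Definition MLclassNorm (k : fkind) : Type :=
  forall (n : nat) (Es : Idx n -> Space k) (F : Space k), MLmap Es F -> R.

Definition is_pnormed_ml_hyper_ideal (k : fkind) (p : R)
  (HM : MLclass k) (HN : MLclassNorm k) : Prop :=
  (forall n (Es : Idx n -> Space k) (F : Space k),
     (1 <= n)%nat -> (forall i, Banach (Es i)) -> Banach F ->
     (forall A, HM n Es F A -> cml A) /\
     (forall A, finite_type_ml A -> HM n Es F A) /\
     pnormed_subspace ml_zero ml_add ml_scal (HM n Es F) (HN n Es F) p) /\
  (forall n, (1 <= n)%nat -> HN n (fun _ => Kspace k) (Kspace k) (In k n) = 1) /\
  (forall n (m : nat -> nat) (Es : Idx n -> Space k) (F H : Space k)
     (Gs : Idx (psum m n) -> Space k)
     (A : MLmap Es F)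
     (B : forall j : Idx n, MLmap (fun l : Idx (m (proj1_sig j)) => Gs (flat m n j l)) (Es j))
     (t : F -> H),
     (1 <= n)%nat -> (forall j, (j < n)%nat -> (1 <= m j)%nat) ->
     (forall i, Banach (Es i)) -> Banach F -> Banach H -> (forall i, Banach (Gs i)) ->
     HM n Es F A -> (forall j, cml (B j)) -> clin t ->
     let C : MLmap Gs H := fun y => t (A (fun j => B j (fun l => y (flat m n j l)))) in
     HM (psum m n) Gs H C /\
     HN (psum m n) Gs H C <=
       opnorm t * HN n Es F A * iprod 1 Rmult (fun j => mlnorm (B j))).

Definition is_pBanach_ml_hyper_ideal (k : fkind) (p : R)
  (HM : MLclass k) (HN : MLclassNorm k) : Prop :=
  is_pnormed_ml_hyper_ideal k p HM HN /\
  (forall n (Es : Idx n -> Space k) (F : Space k),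
     (1 <= n)%nat -> (forall i, Banach (Es i)) -> Banach F ->
     complete_subspace ml_add ml_scal (HM n Es F) (HN n Es F)).

Definition Pclass (k : fkind) : Type :=
  forall (n : nat) (E F : Space k), (E -> F) -> Prop.
Definition PclassNorm (k : fkind) : Type :=
  forall (n : nat) (E F : Space k), (E -> F) -> R.

Definition is_pnormed_poly_hyper_ideal (k : fkind) (p : R) (Cm : nat -> R)
  (QM : Pclass k) (QN : PclassNorm k) : Prop :=
  (forall n (E F : Space k), (1 <= n)%nat -> Banach E -> Banach F ->
     (forall P, QM n E F P -> is_poly n P) /\
     (forall P, finite_type_poly n P -> QM n E F P) /\
     pnormed_subspace fn_zero fn_add fn_scal (QM n E F) (QN n E F) p) /\
  (forall n, (1 <= n)%nat ->
     QN n (Kspace k) (Kspace k) (fun l : Kt k => Kpow l n) = 1) /\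
  (forall n m (E F G H : Space k) (P : E -> F) (Q : G -> E) (t : F -> H),
     (1 <= n)%nat -> (1 <= m)%nat ->
     Banach E -> Banach F -> Banach G -> Banach H ->
     QM n E F P -> is_poly m Q -> clin t ->
     QM (m * n)%nat G H (fun x => t (P (Q x))) /\
     QN (m * n)%nat G H (fun x => t (P (Q x))) <=
       (Cm m) ^ n * opnorm t * QN n E F P * (pnorm Q) ^ n).

Definition is_pBanach_poly_hyper_ideal (k : fkind) (p : R) (Cm : nat -> R)
  (QM : Pclass k) (QN : PclassNorm k) : Prop :=
  is_pnormed_poly_hyper_ideal k p Cm QM QN /\
  (forall n (E F : Space k), (1 <= n)%nat -> Banach E -> Banach F ->
     complete_subspace fn_add fn_scal (QM n E F) (QN n E F)).

Definition PH {k} (HM : MLclass k) : Pclass k :=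
  fun n E F P => exists A : MLmap (fun _ : Idx n => E) F,
    HM n (fun _ => E) F A /\ forall x, P x = A (fun _ => x).

Definition PHnorm {k} (HM : MLclass k) (HN : MLclassNorm k) : PclassNorm k :=
  fun n E F P => Rinf (fun r => exists A : MLmap (fun _ : Idx n => E) F,
    HM n (fun _ => E) F A /\ (forall x, P x = A (fun _ => x)) /\
    r = HN n (fun _ => E) F A).

Definition Cmm (m : nat) : R := (INR m) ^ m / INR (fact m).

(* Main.v *)
Require Import Defs.
From Stdlib Require Import Reals Lra Lia FunctionalExtensionality Arith Classical ClassicalEpsilon.
From Stdlib Require List.
Open Scope R_scope.

Definition Kr (k : fkind) (r : R) : Kt k :=
  match k return Kt k with KReal => r | KComplex => (r, 0) end.

Definition Kinv (k : fkind) : Kt k -> Kt k :=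
  match k return Kt k -> Kt k with
  | KReal => Rinv
  | KComplex => fun x => (fst x / (fst x * fst x + snd x * snd x),
                         - snd x / (fst x * fst x + snd x * snd x)) end.

Ltac kdes := repeat match goal with
  | [ a : Kt KComplex |- _ ] => destruct a
  | [ a : (R * R)%type |- _ ] => destruct a
  end.

Lemma sq2 x y : 0 <= x*x+y*y.
Proof. nra. Qed.
Lemma sq2m x y u v : 0 <= (x*x+y*y)*(u*u+v*v).
Proof. apply Rmult_le_pos; apply sq2. Qed.

Lemma ctriang a1 a2 b1 b2 :
  sqrt ((a1+b1)*(a1+b1)+(a2+b2)*(a2+b2)) <= sqrt (a1*a1+a2*a2) + sqrt (b1*b1+b2*b2).
Proof.
  pose proof (sqrt_pos (a1*a1+a2*a2)); pose proof (sqrt_pos (b1*b1+b2*b2)).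
  apply Rsqr_incr_0_var; [|lra].
  rewrite Rsqr_sqrt by apply sq2. unfold Rsqr.
  pose proof (sqrt_sqrt (a1*a1+a2*a2) (sq2 _ _)).
  pose proof (sqrt_sqrt (b1*b1+b2*b2) (sq2 _ _)).
  assert (a1*b1+a2*b2 <= sqrt (a1*a1+a2*a2) * sqrt (b1*b1+b2*b2)).
  { rewrite <- sqrt_mult by apply sq2.
    destruct (Rle_dec (a1*b1+a2*b2) 0). pose proof (sqrt_pos ((a1 * a1 + a2 * a2) * (b1 * b1 + b2 * b2))); lra.
    apply Rsqr_incr_0_var. rewrite Rsqr_sqrt by apply sq2m. unfold Rsqr. pose proof (Rle_0_sqr (a1*b2-a2*b1)); unfold Rsqr in *; nra. apply sqrt_pos. }
  nra.
Qed.

Section K.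
Variable k : fkind.

Lemma Kadd_comm (a b : Kt k) : Kadd a b = Kadd b a.
Proof. destruct k; simpl in *; kdes; simpl; try ring; f_equal; ring. Qed.
Lemma Kadd_assoc (a b c : Kt k) : Kadd a (Kadd b c) = Kadd (Kadd a b) c.
Proof. destruct k; simpl in *; kdes; simpl; try ring; f_equal; ring. Qed.
Lemma Kadd_0_l (a : Kt k) : Kadd (Kzero k) a = a.
Proof. destruct k; simpl in *; kdes; simpl; try ring; f_equal; ring. Qed.
Lemma Kadd_opp (a : Kt k) : Kadd a (Kopp a) = Kzero k.
Proof. destruct k; simpl in *; kdes; simpl; try ring; f_equal; ring. Qed.
Lemma Kmul_comm (a b : Kt k) : Kmul a b = Kmul b a.
Proof. destruct k; simpl in *; kdes; simpl; try ring; f_equal; ring. Qed.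
Lemma Kmul_assoc (a b c : Kt k) : Kmul a (Kmul b c) = Kmul (Kmul a b) c.
Proof. destruct k; simpl in *; kdes; simpl; try ring; f_equal; ring. Qed.
Lemma Kmul_1_l (a : Kt k) : Kmul (Kone k) a = a.
Proof. destruct k; simpl in *; kdes; simpl; try ring; f_equal; ring. Qed.
Lemma Kmul_0_l (a : Kt k) : Kmul (Kzero k) a = Kzero k.
Proof. destruct k; simpl in *; kdes; simpl; try ring; f_equal; ring. Qed.
Lemma Kmul_add_r (a b c : Kt k) : Kmul a (Kadd b c) = Kadd (Kmul a b) (Kmul a c).
Proof. destruct k; simpl in *; kdes; simpl; try ring; f_equal; ring. Qed.
Lemma Kmul_opp_1 (a : Kt k) : Kmul (Kopp (Kone k)) a = Kopp a.
Proof. destruct k; simpl in *; kdes; simpl; try ring; f_equal; ring. Qed.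

Lemma Kr_add a b : Kr k (a + b) = Kadd (Kr k a) (Kr k b).
Proof. destruct k; simpl; try ring; f_equal; ring. Qed.
Lemma Kr_mul a b : Kr k (a * b) = Kmul (Kr k a) (Kr k b).
Proof. destruct k; simpl; try ring; f_equal; ring. Qed.
Lemma Kr_opp a : Kr k (- a) = Kopp (Kr k a).
Proof. destruct k; simpl; try ring; f_equal; ring. Qed.
Lemma Kr_1 : Kr k 1 = Kone k.
Proof. destruct k; reflexivity. Qed.
Lemma Kr_0 : Kr k 0 = Kzero k.
Proof. destruct k; reflexivity. Qed.
Lemma Kr_pow r n : Kr k (r ^ n) = Kpow (Kr k r) n.
Proof. induction n; simpl. apply Kr_1. rewrite Kr_mul, IHn. apply Kmul_comm. Qed.

Lemma sqrt_sq_abs r : sqrt (r * r + 0 * 0) = Rabs r.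
Proof. replace (r*r+0*0) with (Rsqr r) by (unfold Rsqr; ring). apply sqrt_Rsqr_abs. Qed.

Lemma Kabs_Kr r : Kabs (Kr k r) = Rabs r.
Proof. destruct k; simpl. reflexivity. apply sqrt_sq_abs. Qed.

Lemma Kabs_ge0 (a : Kt k) : 0 <= Kabs a.
Proof. destruct k; simpl in *; kdes. apply Rabs_pos. apply sqrt_pos. Qed.

Lemma Kabs_mul (a b : Kt k) : Kabs (Kmul a b) = Kabs a * Kabs b.
Proof.
  destruct k; simpl in *; kdes; simpl. apply Rabs_mult.
  rewrite <- sqrt_mult; [f_equal; ring| |]; apply Rplus_le_le_0_compat; apply Rle_0_sqr.
Qed.

Lemma Kabs_zero_eq (a : Kt k) : Kabs a = 0 -> a = Kzero k.
Proof.
  destruct k; simpl in *; kdes; simpl; intro H.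
  - destruct (Req_dec a 0); auto. exfalso; apply Rabs_no_R0 in H0; auto.
  - apply sqrt_eq_0 in H; [|nra]. f_equal; nra.
Qed.

Lemma Kabs_0 : Kabs (Kzero k) = 0.
Proof. rewrite <- Kr_0, Kabs_Kr. apply Rabs_R0. Qed.
Lemma Kabs_1 : Kabs (Kone k) = 1.
Proof. rewrite <- Kr_1, Kabs_Kr. apply Rabs_R1. Qed.

Lemma Kabs_opp (a : Kt k) : Kabs (Kopp a) = Kabs a.
Proof. rewrite <- Kmul_opp_1, Kabs_mul, <- Kr_1, <- Kr_opp, Kabs_Kr. rewrite Rabs_Ropp, Rabs_R1; ring. Qed.

Lemma Kabs_triang (a b : Kt k) : Kabs (Kadd a b) <= Kabs a + Kabs b.
Proof.
  destruct k; simpl in *; kdes; simpl. apply Rabs_triang. apply ctriang.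
Qed.

Lemma Kinv_r (a : Kt k) : a <> Kzero k -> Kmul a (Kinv k a) = Kone k.
Proof.
  destruct k; simpl in *; kdes; simpl; intro H. field; auto.
  assert (r*r+r0*r0 <> 0). { intro. apply H. f_equal; nra. }
  f_equal; field; auto.
Qed.

Lemma Kabs_inv (a : Kt k) : a <> Kzero k -> Kabs (Kinv k a) * Kabs a = 1.
Proof.
  intro H. rewrite <- Kabs_mul, Kmul_comm, Kinv_r; auto. apply Kabs_1.
Qed.

Lemma Kpow_Kone n : Kpow (Kone k) n = Kone k.
Proof. induction n; simpl; auto. rewrite IHn. apply Kmul_1_l. Qed.

End K.

Section V.
Context {k : fkind} {E : Space k} (HB : Banach E).

Lemma vadd_assoc (x y z : E) : vadd x (vadd y z) = vadd (vadd x y) z.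
Proof. destruct HB as (H1&H2&H3&H4&H5&H6&H7&H8&H9&H10&H11&H12&H13); auto. Qed.
Lemma vadd_comm (x y : E) : vadd x y = vadd y x.
Proof. destruct HB as (H1&H2&H3&H4&H5&H6&H7&H8&H9&H10&H11&H12&H13); auto. Qed.
Lemma vadd_0 (x : E) : vadd x (vzero E) = x.
Proof. destruct HB as (H1&H2&H3&H4&H5&H6&H7&H8&H9&H10&H11&H12&H13); auto. Qed.
Lemma vadd_opp (x : E) : vadd x (vopp x) = vzero E.
Proof. destruct HB as (H1&H2&H3&H4&H5&H6&H7&H8&H9&H10&H11&H12&H13); auto. Qed.
Lemma vscal_assoc a b (x : E) : vscal a (vscal b x) = vscal (Kmul a b) x.
Proof. destruct HB as (H1&H2&H3&H4&H5&H6&H7&H8&H9&H10&H11&H12&H13); auto. Qed.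
Lemma vscal_1 (x : E) : vscal (Kone k) x = x.
Proof. destruct HB as (H1&H2&H3&H4&H5&H6&H7&H8&H9&H10&H11&H12&H13); auto. Qed.
Lemma vscal_addv a (x y : E) : vscal a (vadd x y) = vadd (vscal a x) (vscal a y).
Proof. destruct HB as (H1&H2&H3&H4&H5&H6&H7&H8&H9&H10&H11&H12&H13); auto. Qed.
Lemma vscal_adds a b (x : E) : vscal (Kadd a b) x = vadd (vscal a x) (vscal b x).
Proof. destruct HB as (H1&H2&H3&H4&H5&H6&H7&H8&H9&H10&H11&H12&H13); auto. Qed.
Lemma vnorm_ge0 (x : E) : 0 <= vnorm x.
Proof. destruct HB as (H1&H2&H3&H4&H5&H6&H7&H8&H9&H10&H11&H12&H13); auto. Qed.
Lemma vnorm_eq0 (x : E) : vnorm x = 0 -> x = vzero E.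
Proof. destruct HB as (H1&H2&H3&H4&H5&H6&H7&H8&H9&H10&H11&H12&H13); auto. Qed.
Lemma vnorm_scal a (x : E) : vnorm (vscal a x) = Kabs a * vnorm x.
Proof. destruct HB as (H1&H2&H3&H4&H5&H6&H7&H8&H9&H10&H11&H12&H13); auto. Qed.
Lemma vnorm_triang (x y : E) : vnorm (vadd x y) <= vnorm x + vnorm y.
Proof. destruct HB as (H1&H2&H3&H4&H5&H6&H7&H8&H9&H10&H11&H12&H13); auto. Qed.
Lemma vcomplete (u : nat -> E) :
     (forall eps, 0 < eps -> exists N, forall i j, (N <= i)%nat -> (N <= j)%nat ->
        vnorm (vsub (u i) (u j)) < eps) ->
     exists x : E, forall eps, 0 < eps -> exists N, forall i, (N <= i)%nat ->
        vnorm (vsub (u i) x) < eps.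
Proof. destruct HB as (H1&H2&H3&H4&H5&H6&H7&H8&H9&H10&H11&H12&H13); auto. Qed.

Lemma vadd_0_l (x : E) : vadd (vzero E) x = x.
Proof. rewrite vadd_comm; apply vadd_0. Qed.

Lemma vadd_cancel (x y z : E) : vadd x y = vadd x z -> y = z.
Proof.
  intro H. assert (vadd (vopp x) (vadd x y) = vadd (vopp x) (vadd x z)) by (rewrite H; auto).
  rewrite !vadd_assoc, (vadd_comm (vopp x) x), vadd_opp, !vadd_0_l in H0. auto.
Qed.

Lemma vadd_self_0 (x : E) : vadd x x = x -> x = vzero E.
Proof. intro H. apply (vadd_cancel x). rewrite vadd_0; auto. Qed.

Lemma vscal_0 (x : E) : vscal (Kzero k) x = vzero E.
Proof. apply vadd_self_0. rewrite <- vscal_adds. rewrite Kadd_0_l. auto. Qed.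

Lemma vscal_v0 a : vscal a (vzero E) = vzero E.
Proof. apply vadd_self_0. rewrite <- vscal_addv, vadd_0. auto. Qed.

Lemma vopp_scal (x : E) : vopp x = vscal (Kopp (Kone k)) x.
Proof.
  apply (vadd_cancel x). rewrite vadd_opp. rewrite <- (vscal_1 x) at 1.
  rewrite <- vscal_adds, Kadd_opp, vscal_0. auto.
Qed.

Lemma vnorm_0 : vnorm (vzero E) = 0.
Proof. rewrite <- (vscal_0 (vzero E)), vnorm_scal, Kabs_0. ring. Qed.

Lemma vnorm_opp (x : E) : vnorm (vopp x) = vnorm x.
Proof. rewrite vopp_scal, vnorm_scal, Kabs_opp, Kabs_1. ring. Qed.

Lemma vsub_self (x : E) : vsub x x = vzero E.
Proof. apply vadd_opp. Qed.

Lemma vopp_add (x y : E) : vopp (vadd x y) = vadd (vopp x) (vopp y).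
Proof. rewrite !vopp_scal, vscal_addv. auto. Qed.

Lemma vopp_opp (x : E) : vopp (vopp x) = x.
Proof. apply (vadd_cancel (vopp x)). rewrite vadd_opp, vadd_comm, vadd_opp. auto. Qed.

Lemma vopp_0 : vopp (vzero E) = vzero E.
Proof. rewrite vopp_scal. apply vscal_v0. Qed.

Lemma vnorm_sub_sym (x y : E) : vnorm (vsub x y) = vnorm (vsub y x).
Proof.
  rewrite <- vnorm_opp. unfold vsub. rewrite vopp_add, vopp_opp, vadd_comm. auto.
Qed.

Lemma vadd_4 (a b c d : E) : vadd (vadd a b) (vadd c d) = vadd (vadd a c) (vadd b d).
Proof.
  rewrite !vadd_assoc. f_equal. rewrite <- !vadd_assoc. f_equal. apply vadd_comm.
Qed.

Lemma vsub_add (a b c d : E) : vsub (vadd a b) (vadd c d) = vadd (vsub a c) (vsub b d).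
Proof. unfold vsub. rewrite vopp_add. apply vadd_4. Qed.

Lemma vscal_sub a (x y : E) : vscal a (vsub x y) = vsub (vscal a x) (vscal a y).
Proof.
  unfold vsub. rewrite vscal_addv, !vopp_scal, !vscal_assoc, Kmul_comm. auto.
Qed.

Lemma vscal_subs a b (x : E) : vsub (vscal a x) (vscal b x) = vscal (Kadd a (Kopp b)) x.
Proof. unfold vsub. rewrite vscal_adds, vopp_scal, vscal_assoc, Kmul_opp_1. auto. Qed.

Lemma vsub_0 (x : E) : vsub x (vzero E) = x.
Proof. unfold vsub. rewrite vopp_0. apply vadd_0. Qed.

Lemma vsub_0_l (x : E) : vsub (vzero E) x = vopp x.
Proof. unfold vsub. apply vadd_0_l. Qed.

Lemma vadd_sub (x y : E) : vadd y (vsub x y) = x.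
Proof. unfold vsub. rewrite vadd_comm, <- vadd_assoc, (vadd_comm (vopp y)), vadd_opp, vadd_0. auto. Qed.

Lemma vsub_triang (x y z : E) : vnorm (vsub x z) <= vnorm (vsub x y) + vnorm (vsub y z).
Proof.
  replace (vsub x z) with (vadd (vsub x y) (vsub y z)). apply vnorm_triang.
  unfold vsub. rewrite <- vadd_assoc. f_equal. rewrite vadd_assoc, (vadd_comm (vopp y)), vadd_opp, vadd_0_l. auto.
Qed.

Lemma vsumn_add n (f g : nat -> E) : vsumn n (fun l => vadd (f l) (g l)) = vadd (vsumn n f) (vsumn n g).
Proof. induction n; simpl. rewrite vadd_0; auto. rewrite IHn. apply vadd_4. Qed.

Lemma vsumn_scal n a (f : nat -> E) : vsumn n (fun l => vscal a (f l)) = vscal a (vsumn n f).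
Proof. induction n; simpl. rewrite vscal_v0; auto. rewrite IHn, vscal_addv. auto. Qed.

Lemma vsumn_ext n (f g : nat -> E) : (forall l, (l < n)%nat -> f l = g l) -> vsumn n f = vsumn n g.
Proof. induction n; simpl; intros; auto. rewrite IHn, H; auto. Qed.

Lemma vsumn_norm_le n (f : nat -> E) M : (forall l, (l < n)%nat -> vnorm (f l) <= M) ->
  vnorm (vsumn n f) <= INR n * M.
Proof.
  induction n; cbn [vsumn]; intros. rewrite vnorm_0; simpl; lra.
  eapply Rle_trans. apply vnorm_triang. rewrite S_INR.
  assert (vnorm (vsumn n f) <= INR n * M) by (apply IHn; intros; apply H; lia).
  specialize (H n (Nat.lt_succ_diag_r n)). lra.
Qed.

Lemma vsumn_zero n : vsumn n (fun _ => vzero E) = vzero E.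
Proof. induction n; simpl; auto. rewrite IHn; apply vadd_0. Qed.

End V.

Lemma Rsup_ub (E : R -> Prop) x : bound E -> E x -> x <= Rsup E.
Proof.
  intros Hb Hx. unfold Rsup. destruct ClassicalEpsilon.excluded_middle_informative as [h|h].
  - destruct completeness as [s [H1 H2]]. simpl. apply H1; auto.
  - exfalso. apply h. split; eauto.
Qed.

Lemma Rsup_le_ne (E : R -> Prop) M : (forall x, E x -> x <= M) -> (exists x, E x) -> Rsup E <= M.
Proof.
  intros H Hne. unfold Rsup. destruct ClassicalEpsilon.excluded_middle_informative as [h|h].
  - destruct completeness as [s [H1 H2]]. simpl. apply H2. intros y Hy; auto.
  - exfalso. apply h. split; auto. exists M; intros y Hy; auto.
Qed.

Lemma Rsup_le (E : R -> Prop) M : (forall x, E x -> x <= M) -> 0 <= M -> Rsup E <= M.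
Proof.
  intros H HM. destruct (classic (exists x, E x)). apply Rsup_le_ne; auto.
  unfold Rsup. destruct ClassicalEpsilon.excluded_middle_informative as [h|h]; auto.
  exfalso; apply H0; apply h.
Qed.

Lemma Rsup_ge0 (E : R -> Prop) : (forall x, E x -> 0 <= x) -> 0 <= Rsup E.
Proof.
  intros H. unfold Rsup. destruct ClassicalEpsilon.excluded_middle_informative as [h|h]; [|lra].
  destruct completeness as [s [H1 H2]]. simpl. destruct h as [_ [x Hx]].
  apply Rle_trans with x; auto.
Qed.

Lemma Rinf_le (E : R -> Prop) x : (forall y, E y -> 0 <= y) -> E x -> Rinf E <= x.
Proof.
  intros H Hx. unfold Rinf. assert (- x <= Rsup (fun y => E (- y))).
  { apply Rsup_ub. exists 0. intros y Hy. specialize (H _ Hy). lra.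
    rewrite Ropp_involutive; auto. }
  lra.
Qed.

Lemma Rinf_ge (E : R -> Prop) M : (forall y, E y -> M <= y) -> (exists x, E x) -> M <= Rinf E.
Proof.
  intros H [x Hx]. unfold Rinf. assert (Rsup (fun y => E (- y)) <= - M).
  { apply Rsup_le_ne. intros y Hy. specialize (H _ Hy). lra.
    exists (- x). rewrite Ropp_involutive; auto. }
  lra.
Qed.

Lemma Rinf_ge0 (E : R -> Prop) : (forall y, E y -> 0 <= y) -> 0 <= Rinf E.
Proof.
  intros H. destruct (classic (exists x, E x)). apply Rinf_ge; auto.
  unfold Rinf, Rsup. destruct ClassicalEpsilon.excluded_middle_informative as [h|h]; [|lra].
  exfalso. destruct h as [_ [y Hy]]. apply H0. eauto.
Qed.

Lemma Rinf_approx (E : R -> Prop) eps : (forall y, E y -> 0 <= y) -> (exists x, E x) -> 0 < eps ->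
  exists x, E x /\ x < Rinf E + eps.
Proof.
  intros H Hne He. apply NNPP. intro Hn.
  assert (Rinf E + eps <= Rinf E).
  { apply Rinf_ge; auto. intros y Hy. apply Rnot_lt_le. intro. apply Hn. eauto. }
  lra.
Qed.

Lemma idx_eq {n} (i j : Idx n) : proj1_sig i = proj1_sig j -> i = j.
Proof.
  destruct i as [i hi], j as [j hj]; simpl; intro; subst. f_equal. apply le_unique.
Qed.

Definition upd {n} {T : Type} (x : Idx n -> T) (i : Idx n) (v : T) : Idx n -> T :=
  fun j => if Nat.eqb (proj1_sig j) (proj1_sig i) then v else x j.

Lemma upd_same {n T} (x : Idx n -> T) i v : upd x i v i = v.
Proof. unfold upd. rewrite Nat.eqb_refl. auto. Qed.
Lemma upd_other {n T} (x : Idx n -> T) i j v : j <> i -> upd x i v j = x j.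
Proof.
  unfold upd. intro H. destruct (Nat.eqb_spec (proj1_sig j) (proj1_sig i)); auto.
  exfalso; apply H, idx_eq; auto.
Qed.

Definition natof {n} {T} (d : T) (a : Idx n -> T) (l : nat) : T :=
  match lt_dec l n with left h => a (exist _ l h) | right _ => d end.

Lemma natof_in {n T} (d : T) (a : Idx n -> T) (i : Idx n) : natof d a (proj1_sig i) = a i.
Proof.
  unfold natof. destruct lt_dec. f_equal. apply idx_eq; auto. exfalso; destruct i; simpl in *; lia.
Qed.

Section ML.
Context {k : fkind} {n : nat} {G F : Space k} (HG : Banach G) (HF : Banach F).
Context (A : MLmap (fun _ : Idx n => G) F) (HA : is_multilinear A).

Lemma ml_slot0 (z : Idx n -> G) i : z i = vzero G -> A z = vzero F.
Proof.
  intro H. apply (vadd_self_0 HF). rewrite <- (vscal_1 HF (A z)) at 2.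
  symmetry. apply (HA i z z z (Kone k)). auto.
  rewrite H, (vscal_v0 HG), (vadd_0 HG). auto.
Qed.

Lemma ml_scal_slot (z : Idx n -> G) i a : A (upd z i (vscal a (z i))) = vscal a (A z).
Proof.
  rewrite <- (vadd_0_l HF (vscal a (A z))).
  rewrite <- (ml_slot0 (upd z i (vzero G)) i) by apply upd_same.
  apply HA with (i := i).
  - intros j Hj. rewrite !upd_other; auto.
  - rewrite !upd_same, (vadd_0_l HG). auto.
Qed.

Fixpoint pp (a : Idx n -> Kt k) (r : nat) : Kt k :=
  match r with O => Kone k | S r' => Kmul (pp a r') (natof (Kone k) a r') end.

Lemma ml_scal_pre (a : Idx n -> Kt k) (y : Idx n -> G) r :
  A (fun i => if Nat.ltb (proj1_sig i) r then vscal (a i) (y i) else y i) = vscal (pp a r) (A y).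
Proof.
  induction r.
  - simpl. rewrite (vscal_1 HF). f_equal.
  - simpl. destruct (lt_dec r n) as [h|h].
    + set (i0 := exist (fun l => (l < n)%nat) r h : Idx n).
      replace (fun i : Idx n => if Nat.ltb (proj1_sig i) (S r) then vscal (a i) (y i) else y i)
        with (upd (fun i : Idx n => if Nat.ltb (proj1_sig i) r then vscal (a i) (y i) else y i) i0
                (vscal (a i0) ((fun i : Idx n => if Nat.ltb (proj1_sig i) r then vscal (a i) (y i) else y i) i0))).
      * rewrite ml_scal_slot, IHr, (vscal_assoc HF). f_equal.
        rewrite Kmul_comm. f_equal. unfold natof. destruct lt_dec; [|lia]. f_equal. apply idx_eq; auto.
      * apply functional_extensionality. intro j. unfold upd. simpl.
        destruct (Nat.eqb_spec (proj1_sig j) r).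
        -- assert (j = i0) by (apply idx_eq; auto). subst j. simpl. rewrite Nat.ltb_irrefl.
           rewrite (proj2 (Nat.ltb_lt r (S r))) by lia. auto.
        -- destruct (Nat.ltb_spec (proj1_sig j) r); destruct (Nat.ltb_spec (proj1_sig j) (S r)); auto; lia.
    + unfold natof. destruct lt_dec; [lia|]. rewrite Kmul_comm, Kmul_1_l, <- IHr. f_equal.
      apply functional_extensionality. intro j. destruct j as [j hj]; simpl.
      destruct (Nat.ltb_spec j r); destruct (Nat.ltb_spec j (S r)); auto; lia.
Qed.

End ML.

Lemma pp_widen {k n} (a : Idx (S n) -> Kt k) r : (r <= n)%nat -> pp a r = pp (fun i => a (widen i)) r.
Proof.
  induction r; simpl; intros; auto. rewrite IHr by lia. f_equal.
  unfold natof. do 2 destruct lt_dec; try lia. f_equal. apply idx_eq; auto.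
Qed.

Lemma pp_iprod {k n} (a : Idx n -> Kt k) : pp a n = iprod (Kone k) (@Kmul k) a.
Proof.
  induction n; simpl; auto. rewrite pp_widen by lia. rewrite IHn. f_equal.
  unfold natof. destruct lt_dec; [|lia]. f_equal. apply idx_eq; auto.
Qed.

Lemma ml_scal_all {k n} {G F : Space k} (HG : Banach G) (HF : Banach F)
  (A : MLmap (fun _ : Idx n => G) F) (HA : is_multilinear A) (a : Idx n -> Kt k) (y : Idx n -> G) :
  A (fun i => vscal (a i) (y i)) = vscal (iprod (Kone k) (@Kmul k) a) (A y).
Proof.
  rewrite <- pp_iprod, <- (ml_scal_pre HG HF A HA). f_equal.
  apply functional_extensionality. intros [j hj]; simpl. destruct (Nat.ltb_spec j n); auto; lia.
Qed.

Lemma iprod_const {k n} (a : Kt k) : iprod (Kone k) (@Kmul k) (fun _ : Idx n => a) = Kpow a n.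
Proof. induction n; simpl; auto. rewrite IHn. auto. Qed.

Lemma ml_homog {k n} {G F : Space k} (HG : Banach G) (HF : Banach F)
  (A : MLmap (fun _ : Idx n => G) F) (HA : is_multilinear A) a (x : G) :
  A (fun _ => vscal a x) = vscal (Kpow a n) (A (fun _ => x)).
Proof.
  rewrite <- iprod_const. apply (ml_scal_all HG HF A HA (fun _ => a) (fun _ => x)).
Qed.

Lemma ml_zero_arg {k n} {G F : Space k} (HG : Banach G) (HF : Banach F)
  (A : MLmap (fun _ : Idx n => G) F) (HA : is_multilinear A) : (1 <= n)%nat ->
  A (fun _ => vzero G) = vzero F.
Proof.
  intro H. apply (ml_slot0 HG HF A HA _ (exist _ 0%nat H)). auto.
Qed.

Lemma Rcompl (u : nat -> R) :
  (forall eps, 0 < eps -> exists N, forall i j, (N <= i)%nat -> (N <= j)%nat -> Rabs (u i + - u j) < eps) ->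
  exists x, forall eps, 0 < eps -> exists N, forall i, (N <= i)%nat -> Rabs (u i + - x) < eps.
Proof.
  intro H. destruct (R_complete u) as [l Hl].
  - intros eps He. destruct (H eps He) as [N HN]. exists N. intros; apply HN; lia.
  - exists l. intros eps He. destruct (Hl eps He) as [N HN]. exists N. intros; apply HN; lia.
Qed.

Lemma abs_le_csqrt a b : Rabs a <= sqrt (a*a+b*b).
Proof.
  rewrite <- sqrt_sq_abs. apply sqrt_le_1_alt. nra.
Qed.

Lemma csqrt_le a b : sqrt (a*a+b*b) <= Rabs a + Rabs b.
Proof.
  pose proof (Rabs_pos a); pose proof (Rabs_pos b).
  apply Rsqr_incr_0_var; [|lra]. rewrite Rsqr_sqrt by apply sq2. unfold Rsqr.
  assert (a*a = Rabs a * Rabs a) by (rewrite <- Rabs_mult; rewrite Rabs_right; nra).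
  assert (b*b = Rabs b * Rabs b) by (rewrite <- Rabs_mult; rewrite Rabs_right; nra).
  nra.
Qed.

Lemma Kspace_Banach k : Banach (Kspace k).
Proof.
  unfold Banach; simpl.
  repeat split; intros; try apply Kadd_opp; try (rewrite Kadd_comm; apply Kadd_0_l); try (rewrite Kmul_comm, Kmul_add_r, !(Kmul_comm _ x); auto); try apply Kadd_assoc; try apply Kadd_comm; try apply Kmul_assoc;
    try apply Kmul_1_l; try apply Kmul_add_r; try apply Kabs_ge0; try apply Kabs_mul;
    try apply Kabs_triang; try apply Kabs_zero_eq; auto.
  - destruct k; simpl in *.
    + apply Rcompl; auto.
    + destruct (Rcompl (fun i => fst (u i))) as [x1 H1].
      { intros eps He. destruct (H eps He) as [N HN]. exists N. intros i j Hi Hj.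
        specialize (HN i j Hi Hj). eapply Rle_lt_trans; [|apply HN]. apply abs_le_csqrt. }
      destruct (Rcompl (fun i => snd (u i))) as [x2 H2].
      { intros eps He. destruct (H eps He) as [N HN]. exists N. intros i j Hi Hj.
        specialize (HN i j Hi Hj). eapply Rle_lt_trans; [|apply HN].
        rewrite (Rplus_comm (_ * _)). apply abs_le_csqrt. }
      exists (x1, x2). intros eps He.
      destruct (H1 (eps/2)) as [N1 HN1]; [lra|]. destruct (H2 (eps/2)) as [N2 HN2]; [lra|].
      exists (N1 + N2)%nat. intros i Hi. simpl.
      eapply Rle_lt_trans. apply csqrt_le.
      specialize (HN1 i ltac:(lia)); specialize (HN2 i ltac:(lia)). simpl in *. lra.
Qed.

Definition setn {T} (e : nat -> T) (i : nat) (v : T) : nat -> T :=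
  fun j => if Nat.eqb j i then v else e j.

Fixpoint Dr (m : nat) (F : (nat -> R) -> R) : R :=
  match m with
  | O => F (fun _ => 1)
  | S m' => Dr m' (fun e => F (setn e m' 1)) - Dr m' (fun e => F (setn e m' (-1)))
  end.

Fixpoint sumr (m : nat) (e : nat -> R) : R :=
  match m with O => 0 | S m' => sumr m' e + e m' end.

Fixpoint prodn (m : nat) (g : nat -> R) : R :=
  match m with O => 1 | S m' => prodn m' g * g m' end.

Lemma sumr_ext m e1 e2 : (forall l, (l < m)%nat -> e1 l = e2 l) -> sumr m e1 = sumr m e2.
Proof. induction m; simpl; intros; auto. rewrite IHm, H; auto. Qed.

Lemma prodn_ext m g1 g2 : (forall l, (l < m)%nat -> g1 l = g2 l) -> prodn m g1 = prodn m g2.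
Proof. induction m; simpl; intros; auto. rewrite IHm, H; auto. Qed.

Lemma setn_lt {T} (e : nat -> T) i v l : (l < i)%nat -> setn e i v l = e l.
Proof. unfold setn; intro. destruct (Nat.eqb_spec l i); auto; lia. Qed.
Lemma setn_eq {T} (e : nat -> T) i v : setn e i v i = v.
Proof. unfold setn. rewrite Nat.eqb_refl; auto. Qed.

Lemma Dr_ext m F1 F2 : (forall e, F1 e = F2 e) -> Dr m F1 = Dr m F2.
Proof. intro H. replace F2 with F1; auto. apply functional_extensionality; auto. Qed.

Fixpoint dN (k : nat) (h : R -> R) (a : R) : R :=
  match k with O => h a | S k' => dN k' h (a + 1) - dN k' h (a - 1) end.

Lemma Dr_dN k : forall h a, Dr k (fun e => h (a + sumr k e)) = dN k h a.
Proof.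
  induction k; intros; simpl. f_equal; ring.
  rewrite <- !IHk. f_equal; apply Dr_ext; intro e; f_equal;
  rewrite setn_eq, (sumr_ext k (setn e k _) e) by (intros; apply setn_lt; auto); ring.
Qed.

Lemma dN_ext k h1 h2 a : (forall b, h1 b = h2 b) -> dN k h1 a = dN k h2 a.
Proof. intro H. replace h2 with h1; auto. apply functional_extensionality; auto. Qed.

Lemma dN_shift k : forall h a s, dN k (fun b => h (b + s)) a = dN k h (a + s).
Proof.
  induction k; intros; simpl; auto. rewrite !IHk. f_equal; f_equal; ring.
Qed.

Lemma dN_sub k : forall h1 h2 a, dN k (fun b => h1 b - h2 b) a = dN k h1 a - dN k h2 a.
Proof. induction k; intros; simpl; auto. rewrite !IHk. ring. Qed.

Lemma dN_scal k : forall c h a, dN k (fun b => c * h b) a = c * dN k h a.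
Proof. induction k; intros; simpl; auto. rewrite !IHk. ring. Qed.

Lemma dN_sum k : forall (g : nat -> R -> R) N a,
  dN k (fun b => sum_f_R0 (fun i => g i b) N) a = sum_f_R0 (fun i => dN k (g i) a) N.
Proof.
  induction k; intros; simpl; auto. rewrite !IHk. rewrite <- minus_sum. auto.
Qed.

Lemma dN_S k h a : dN (S k) h a = dN k (fun b => h (b + 1) - h (b - 1)) a.
Proof.
  simpl. rewrite dN_sub. unfold Rminus at 3 4. rewrite !dN_shift. auto.
Qed.

Lemma sum_zero f N : (forall i, (i <= N)%nat -> f i = 0) -> sum_f_R0 f N = 0.
Proof. induction N; simpl; intros. apply H; lia. rewrite IHN, H; auto. ring. Qed.

Lemma sum_S f N : sum_f_R0 f (S N) = sum_f_R0 f N + f (S N).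
Proof. reflexivity. Qed.

Lemma sum_last f N : (forall i, (i < N)%nat -> f i = 0) -> sum_f_R0 f N = f N.
Proof.
  destruct N; intros; auto. rewrite sum_S, sum_zero. ring. intros; apply H; lia.
Qed.

Lemma C_S_n k : C (S k) k = INR (S k).
Proof.
  unfold C. replace (S k - k)%nat with 1%nat by lia. rewrite fact_simpl. simpl (fact 1).
  rewrite mult_INR. change (INR 1) with 1. pose proof (INR_fact_neq_0 k). field. auto.
Qed.

Lemma dN_pow k : forall j a, (j <= k)%nat ->
  dN k (fun b => b ^ j) a = if Nat.eqb j k then 2 ^ k * INR (fact k) else 0.
Proof.
  induction k; intros j a Hj.
  - assert (j = 0%nat) by lia. subst. simpl. ring.
  - rewrite dN_S.
    rewrite (dN_ext k _ (fun b => sum_f_R0 (fun i => (C j i * (1 ^ (j - i) - (-1) ^ (j - i))) * b ^ i) j)).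
    2:{ intro b. replace (b - 1) with (b + -1) by ring. rewrite !binomial. rewrite <- minus_sum. apply sum_eq. intros. ring. }
    rewrite dN_sum.
    rewrite (sum_eq _ (fun i => (C j i * (1 ^ (j - i) - (-1) ^ (j - i))) * dN k (fun b => b ^ i) a))
      by (intros; apply dN_scal).
    destruct j as [|j].
    + simpl. ring_simplify. destruct k; auto.
    + rewrite sum_S, Nat.sub_diag.
      replace (1 ^ 0 - (-1) ^ 0) with 0 by (simpl; ring). rewrite Rmult_0_r, Rmult_0_l, Rplus_0_r.
      replace (Nat.eqb (S j) (S k)) with (Nat.eqb j k) by auto.
      destruct (Nat.eqb_spec j k).
      * subst j. rewrite sum_last.
        -- rewrite IHk by lia. rewrite Nat.eqb_refl.
           replace (S k - k)%nat with 1%nat by lia. rewrite C_S_n.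
           rewrite (fact_simpl k). rewrite mult_INR. simpl pow. ring.
        -- intros i Hi. rewrite IHk by lia. destruct (Nat.eqb_spec i k); [lia|]. ring.
      * rewrite sum_zero. ring. intros i Hi. rewrite IHk by lia.
        destruct (Nat.eqb_spec i k); [lia|]. ring.
Qed.

Lemma Dr_pow m : Dr m (fun e => (sumr m e) ^ m) = 2 ^ m * INR (fact m).
Proof.
  rewrite (Dr_ext m _ (fun e => (0 + sumr m e) ^ m)) by (intro; f_equal; ring).
  pose proof (Dr_dN m (fun b => b ^ m) 0) as H. cbv beta in H. rewrite H.
  rewrite dN_pow by lia. rewrite Nat.eqb_refl. auto.
Qed.

Lemma Dr_indep m : forall F l, (l < m)%nat -> (forall e v, F (setn e l v) = F e) -> Dr m F = 0.
Proof.
  induction m; intros F l Hl H; [lia|]. simpl.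
  destruct (Nat.eq_dec l m).
  - subst l. rewrite (Dr_ext m _ (fun e => F (setn e m (-1)))). ring.
    intro e. rewrite H. symmetry. apply H.
  - rewrite (IHm _ l), (IHm _ l); try lia; try ring.
    + intros e v. rewrite <- (H (setn e m (-1)) v). f_equal.
      unfold setn. apply functional_extensionality. intro j.
      destruct (Nat.eqb_spec j m); destruct (Nat.eqb_spec j l); auto; lia.
    + intros e v. rewrite <- (H (setn e m 1) v). f_equal.
      unfold setn. apply functional_extensionality. intro j.
      destruct (Nat.eqb_spec j m); destruct (Nat.eqb_spec j l); auto; lia.
Qed.

Module SurjInj.
Import Stdlib.Lists.List.
Lemma surj_inj m (f : nat -> nat) :
  (forall l, (l < m)%nat -> exists i, (i < m)%nat /\ f i = l) ->
  forall i j, (i < m)%nat -> (j < m)%nat -> f i = f j -> i = j.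
Proof.
  intros Hs.
  assert (ND : NoDup (map f (seq 0 m))).
  { apply (NoDup_incl_NoDup (l := seq 0 m)). apply seq_NoDup.
    rewrite length_map, !length_seq; lia.
    intros y Hy. apply in_seq in Hy. destruct (Hs y) as [i [Hi Hfi]]; [lia|].
    rewrite <- Hfi. apply in_map. apply in_seq. lia. }
  intros i j Hi Hj Hij. rewrite NoDup_nth in ND.
  apply (ND i j); rewrite ?length_map, ?length_seq; auto.
  rewrite !(nth_indep _ 0%nat (f 0%nat)) by (rewrite length_map, length_seq; lia).
  rewrite !map_nth, !seq_nth by lia. simpl. auto.
Qed.
End SurjInj.
Notation surj_inj := SurjInj.surj_inj.

Fixpoint Dv {k} {E : Space k} (m : nat) (F : (nat -> R) -> E) : E :=
  match m with
  | O => F (fun _ => 1)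
  | S m' => vsub (Dv m' (fun e => F (setn e m' 1))) (Dv m' (fun e => F (setn e m' (-1))))
  end.

Fixpoint Fsum {k} {E : Space k} (r N : nat) (H : (nat -> nat) -> E) : E :=
  match r with
  | O => H (fun _ => 0%nat)
  | S r' => vsumn N (fun l => Fsum r' N (fun f => H (setn f r' l)))
  end.

Fixpoint kprod {k} (r : nat) (g : nat -> Kt k) : Kt k :=
  match r with O => Kone k | S r' => Kmul (kprod r' g) (g r') end.

Lemma kprod_Kr {k} r (g : nat -> R) : kprod r (fun i => Kr k (g i)) = Kr k (prodn r g).
Proof. induction r; simpl. symmetry; apply Kr_1. rewrite IHr, Kr_mul. auto. Qed.

Lemma kprod_ext {k} r (g1 g2 : nat -> Kt k) : (forall i, (i < r)%nat -> g1 i = g2 i) -> kprod r g1 = kprod r g2.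
Proof. induction r; simpl; intros; auto. rewrite IHr, H; auto. Qed.

Definition signs (e : nat -> R) := forall j, e j = 1 \/ e j = -1.

Lemma signs_setn e i v : signs e -> (v = 1 \/ v = -1) -> signs (setn e i v).
Proof. intros H Hv j. unfold setn. destruct (Nat.eqb j i); auto. Qed.

Section VS.
Context {k : fkind} {E : Space k} (HE : Banach E).

Lemma Dv_ext m (F1 F2 : (nat -> R) -> E) : (forall e, F1 e = F2 e) -> Dv m F1 = Dv m F2.
Proof. intro H. replace F2 with F1; auto. apply functional_extensionality; auto. Qed.

Lemma Dv_scal_r m : forall (g : (nat -> R) -> R) (v : E),
  Dv m (fun e => vscal (Kr k (g e)) v) = vscal (Kr k (Dr m g)) v.
Proof.
  induction m; intros; simpl; auto. rewrite !IHm. rewrite (vscal_subs HE).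
  f_equal. unfold Rminus. rewrite Kr_add, Kr_opp. auto.
Qed.

Lemma vnorm_sub_le (x y : E) : vnorm (vsub x y) <= vnorm x + vnorm y.
Proof. unfold vsub. eapply Rle_trans. apply (vnorm_triang HE). rewrite (vnorm_opp HE). lra. Qed.

Lemma Dv_bound m : forall (F : (nat -> R) -> E) M,
  (forall e, signs e -> vnorm (F e) <= M) -> vnorm (Dv m F) <= 2 ^ m * M.
Proof.
  induction m; intros F M H; simpl.
  - rewrite Rmult_1_l. apply H. intro; auto.
  - eapply Rle_trans. apply vnorm_sub_le.
    assert (vnorm (Dv m (fun e => F (setn e m 1))) <= 2 ^ m * M)
      by (apply IHm; intros; apply H, signs_setn; auto).
    assert (vnorm (Dv m (fun e => F (setn e m (-1)))) <= 2 ^ m * M)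
      by (apply IHm; intros; apply H, signs_setn; auto).
    lra.
Qed.

Definition fin (r N : nat) (f : nat -> nat) := forall i, (i < r)%nat -> (f i < N)%nat.

Lemma Fsum_ext r : forall N (H1 H2 : (nat -> nat) -> E), (forall f, H1 f = H2 f) -> Fsum r N H1 = Fsum r N H2.
Proof. intros. replace H2 with H1; auto. apply functional_extensionality; auto. Qed.

Lemma Fsum_add r : forall N (H1 H2 : (nat -> nat) -> E),
  Fsum r N (fun f => vadd (H1 f) (H2 f)) = vadd (Fsum r N H1) (Fsum r N H2).
Proof.
  induction r; intros; simpl; auto. rewrite <- (vsumn_add HE). apply vsumn_ext. intros; apply IHr.
Qed.

Lemma Fsum_scal r : forall N a (H : (nat -> nat) -> E),
  Fsum r N (fun f => vscal a (H f)) = vscal a (Fsum r N H).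
Proof.
  induction r; intros; simpl; auto. rewrite <- (vsumn_scal HE). apply vsumn_ext. intros; apply IHr.
Qed.

Lemma Fsum_sub r N (H1 H2 : (nat -> nat) -> E) :
  Fsum r N (fun f => vsub (H1 f) (H2 f)) = vsub (Fsum r N H1) (Fsum r N H2).
Proof.
  unfold vsub. rewrite (vopp_scal HE), <- Fsum_scal, <- Fsum_add. apply Fsum_ext.
  intro; rewrite (vopp_scal HE); auto.
Qed.

Lemma Dv_Fsum m : forall r N (H : (nat -> R) -> (nat -> nat) -> E),
  Dv m (fun e => Fsum r N (fun f => H e f)) = Fsum r N (fun f => Dv m (fun e => H e f)).
Proof.
  induction m; intros; simpl; auto. rewrite !IHm. rewrite Fsum_sub. auto.
Qed.

Lemma vsumn_scal_sum N (e : nat -> R) (x : E) :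
  vsumn N (fun l => vscal (Kr k (e l)) x) = vscal (Kr k (sumr N e)) x.
Proof.
  induction N; simpl. rewrite Kr_0, (vscal_0 HE); auto.
  rewrite IHN, Kr_add, (vscal_adds HE). auto.
Qed.

End VS.

Section Expand.
Context {k : fkind} {m : nat} {G E : Space k} (HG : Banach G) (HE : Banach E).
Context (B : MLmap (fun _ : Idx m => G) E) (HB : is_multilinear B).

Lemma ml_slot_sum (W : Idx m -> G) i0 N (c : nat -> Kt k) (w : nat -> G) :
  B (upd W i0 (vsumn N (fun l => vscal (c l) (w l)))) = vsumn N (fun l => vscal (c l) (B (upd W i0 (w l)))).
Proof.
  induction N; simpl.
  - apply (ml_slot0 HG HE B HB _ i0). apply upd_same.
  - rewrite <- IHN. apply HB with (i := i0).
    + intros j Hj. rewrite !upd_other; auto.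
    + rewrite !upd_same. auto.
Qed.

Lemma expand N (c : nat -> Kt k) (w : nat -> G) r : (r <= m)%nat ->
  forall u : Idx m -> G,
  B (fun i => if Nat.ltb (proj1_sig i) r then vsumn N (fun l => vscal (c l) (w l)) else u i) =
  Fsum r N (fun f => vscal (kprod r (fun i => c (f i)))
     (B (fun i => if Nat.ltb (proj1_sig i) r then w (f (proj1_sig i)) else u i))).
Proof.
  induction r; intros Hr u.
  - simpl. rewrite (vscal_1 HE). auto.
  - set (V := vsumn N (fun l => vscal (c l) (w l))).
    set (i0 := exist (fun l => (l < m)%nat) r Hr : Idx m).
    set (W := fun i : Idx m => if Nat.ltb (proj1_sig i) r then V else u i).
    transitivity (B (upd W i0 V)).
    { f_equal. apply functional_extensionality. intro i. unfold upd, W. simpl.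
      destruct (Nat.eqb_spec (proj1_sig i) r); destruct (Nat.ltb_spec (proj1_sig i) (S r));
        destruct (Nat.ltb_spec (proj1_sig i) r); auto; lia. }
    unfold V. rewrite ml_slot_sum. simpl Fsum. apply vsumn_ext. intros l Hl.
    transitivity (vscal (c l) (B (fun i => if Nat.ltb (proj1_sig i) r then V else upd u i0 (w l) i))).
    { f_equal. f_equal. apply functional_extensionality. intro i. unfold upd, W. simpl.
      destruct (Nat.eqb_spec (proj1_sig i) r); destruct (Nat.ltb_spec (proj1_sig i) r); auto; lia. }
    unfold V. rewrite IHr by lia. rewrite <- (Fsum_scal HE). apply Fsum_ext. intro f.
    rewrite (vscal_assoc HE). f_equal.
    + simpl. rewrite Kmul_comm. f_equal. apply kprod_ext. intros; rewrite setn_lt; auto.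
      rewrite setn_eq; auto.
    + f_equal. apply functional_extensionality. intro i. unfold upd. simpl.
      destruct (Nat.ltb_spec (proj1_sig i) r); destruct (Nat.ltb_spec (proj1_sig i) (S r)); try lia.
      * rewrite setn_lt; auto.
      * destruct (Nat.eqb_spec (proj1_sig i) r); [|lia]. rewrite e, setn_eq. auto.
      * destruct (Nat.eqb_spec (proj1_sig i) r); [lia|]. auto.
Qed.

End Expand.

Definition Ve {k m} {G : Space k} (e : nat -> R) (x : Idx m -> G) : G :=
  vsumn m (fun l => vscal (Kr k (e l)) (natof (vzero G) x l)).

Definition Spol {k m} {G E : Space k} (B : MLmap (fun _ : Idx m => G) E) (x : Idx m -> G) : E :=
  vscal (Kr k (/ (2 ^ m * INR (fact m)))) (Dv m (fun e => B (fun _ => Ve e x))).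

Definition kap (m : nat) (f : nat -> nat) : R := Dr m (fun e => prodn m (fun i => e (f i))).

Definition ctT {k m} {G E : Space k} (T : (Idx m -> G) -> E) : Prop :=
  forall (x : Idx m -> G) eps, 0 < eps -> exists d, 0 < d /\
    forall y : Idx m -> G, (forall j, vnorm (vsub (y j) (x j)) < d) -> vnorm (vsub (T y) (T x)) < eps.

Section Pol.
Context {k : fkind} {m : nat} {G E : Space k} (HG : Banach G) (HE : Banach E).
Context (B : MLmap (fun _ : Idx m => G) E) (HB : is_multilinear B).

Lemma Spol_expand x : Spol B x =
  vscal (Kr k (/ (2 ^ m * INR (fact m))))
    (Fsum m m (fun f => vscal (Kr k (kap m f)) (B (fun i => natof (vzero G) x (f (proj1_sig i)))))).
Proof.
  unfold Spol. f_equal.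
  rewrite (Dv_ext m _ (fun e => Fsum m m (fun f => vscal (kprod m (fun i => Kr k (e (f i))))
     (B (fun i => if Nat.ltb (proj1_sig i) m then natof (vzero G) x (f (proj1_sig i)) else vzero G))))).
  - rewrite (Dv_Fsum HE). apply Fsum_ext. intro f. unfold kap.
    rewrite <- (Dv_scal_r HE). apply Dv_ext. intro e. rewrite kprod_Kr. f_equal.
    f_equal. apply functional_extensionality. intros [i hi]; simpl. destruct (Nat.ltb_spec i m); auto; lia.
  - intro e. pose proof (expand HG HE B HB m (fun l => Kr k (e l)) (natof (vzero G) x) m (le_n m) (fun _ => vzero G)) as Hx.
    cbv beta in Hx. rewrite <- Hx. f_equal.
    apply functional_extensionality. intros [i hi]; simpl. destruct (Nat.ltb_spec i m); auto; lia.
Qed.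

Lemma kap_surj f : kap m f <> 0 -> forall l, (l < m)%nat -> exists i, (i < m)%nat /\ f i = l.
Proof.
  intros H l Hl. apply Classical_Prop.NNPP. intro Hn. apply H. unfold kap.
  apply (Dr_indep m _ l Hl). intros e v. apply prodn_ext. intros i Hi.
  unfold setn. destruct (Nat.eqb_spec (f i) l); auto. exfalso; apply Hn; eauto.
Qed.

Lemma Bf_ml f : kap m f <> 0 -> forall (i : Idx m) (x y z : Idx m -> G) a,
  (forall j, j <> i -> x j = z j /\ y j = z j) -> z i = vadd (x i) (vscal a (y i)) ->
  B (fun i => natof (vzero G) z (f (proj1_sig i))) =
  vadd (B (fun i => natof (vzero G) x (f (proj1_sig i)))) (vscal a (B (fun i => natof (vzero G) y (f (proj1_sig i))))).
Proof.
  intros Hk i x y z a Hj Hi.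
  destruct (kap_surj f Hk (proj1_sig i) (proj2_sig i)) as [i1 [Hi1 Hfi1]].
  pose proof (surj_inj m f (kap_surj f Hk)) as Hinj.
  apply HB with (i := exist _ i1 Hi1).
  - intros [j hj] Hne. simpl.
    assert (f j <> proj1_sig i).
    { intro. apply Hne. apply idx_eq; simpl. apply Hinj; auto. congruence. }
    unfold natof. destruct lt_dec as [h|h]; auto.
    apply Hj. intro. subst i. simpl in H. auto.
  - simpl. rewrite Hfi1, !natof_in. auto.
Qed.

Lemma Spol_ml : is_multilinear (Spol B).
Proof.
  intros i x y z a Hj Hi. rewrite !Spol_expand.
  rewrite (vscal_assoc HE), Kmul_comm, <- (vscal_assoc HE), <- (vscal_addv HE). f_equal.
  rewrite <- (Fsum_scal HE), <- (Fsum_add HE). apply Fsum_ext. intro f.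
  destruct (Req_dec (kap m f) 0) as [H0|H0].
  - rewrite H0, Kr_0, !(vscal_0 HE), (vscal_v0 HE), (vadd_0 HE). auto.
  - rewrite (Bf_ml f H0 i x y z a Hj Hi). rewrite (vscal_addv HE), !(vscal_assoc HE), Kmul_comm. auto.
Qed.

Lemma Spol_diag x : Spol B (fun _ => x) = B (fun _ => x).
Proof.
  unfold Spol.
  rewrite (Dv_ext m _ (fun e => vscal (Kr k ((sumr m e) ^ m)) (B (fun _ => x)))).
  - rewrite (Dv_scal_r HE), (vscal_assoc HE), <- Kr_mul, Dr_pow.
    rewrite Rinv_l. rewrite Kr_1. apply (vscal_1 HE).
    apply Rmult_integral_contrapositive_currified. apply pow_nonzero; lra. apply INR_fact_neq_0.
  - intro e. unfold Ve. rewrite (vsumn_ext m _ (fun l => vscal (Kr k (e l)) x)).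
    + rewrite (vsumn_scal_sum HG). rewrite (ml_homog HG HE B HB). rewrite Kr_pow. auto.
    + intros l Hl. unfold natof. destruct lt_dec; auto; lia.
Qed.

End Pol.

Section Cont.
Context {k : fkind} {m : nat} {G E : Space k} (HG : Banach G) (HE : Banach E).

Lemma ct_const (c : E) : ctT (m := m) (G := G) (fun _ => c).
Proof. intros x eps He. exists 1. split; [lra|]. intros. rewrite (vsub_self HE), (vnorm_0 HE). auto. Qed.

Lemma ct_scal (T : (Idx m -> G) -> E) a : ctT T -> ctT (fun x => vscal a (T x)).
Proof.
  intros H x eps He. destruct (H x (eps / (Kabs a + 1))) as [d [Hd Hy]].
  { apply Rdiv_lt_0_compat; auto. pose proof (Kabs_ge0 k a); lra. }
  exists d; split; auto. intros y Hyd. rewrite <- (vscal_sub HE), (vnorm_scal HE).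
  specialize (Hy y Hyd). pose proof (Kabs_ge0 k a).
  pose proof (vnorm_ge0 HE (vsub (T y) (T x))).
  apply Rle_lt_trans with ((Kabs a + 1) * vnorm (vsub (T y) (T x))). nra.
  replace eps with ((Kabs a + 1) * (eps / (Kabs a + 1))) by (field; lra).
  apply Rmult_lt_compat_l; lra.
Qed.

Lemma ct_add (T1 T2 : (Idx m -> G) -> E) : ctT T1 -> ctT T2 -> ctT (fun x => vadd (T1 x) (T2 x)).
Proof.
  intros H1 H2 x eps He. destruct (H1 x (eps/2)) as [d1 [Hd1 Hy1]]; [lra|].
  destruct (H2 x (eps/2)) as [d2 [Hd2 Hy2]]; [lra|].
  exists (Rmin d1 d2). split. apply Rmin_pos; auto. intros y Hy.
  rewrite (vsub_add HE). eapply Rle_lt_trans. apply (vnorm_triang HE).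
  assert (vnorm (vsub (T1 y) (T1 x)) < eps / 2).
  { apply Hy1. intro j. specialize (Hy j). pose proof (Rmin_l d1 d2). lra. }
  assert (vnorm (vsub (T2 y) (T2 x)) < eps / 2).
  { apply Hy2. intro j. specialize (Hy j). pose proof (Rmin_r d1 d2). lra. }
  lra.
Qed.

Lemma ct_vsumn N (H : (Idx m -> G) -> nat -> E) :
  (forall l, ctT (fun x => H x l)) -> ctT (fun x => vsumn N (H x)).
Proof.
  intro Hc. induction N; simpl. apply ct_const. apply ct_add; auto.
Qed.

Lemma ct_Fsum r : forall N (H : (Idx m -> G) -> (nat -> nat) -> E),
  (forall f, ctT (fun x => H x f)) -> ctT (fun x => Fsum r N (H x)).
Proof.
  induction r; intros N H Hc; simpl. apply Hc.
  apply ct_vsumn. intro l. apply (IHr N (fun x f => H x (setn f r l))). intro f; apply Hc.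
Qed.

Lemma ct_Bf (B : MLmap (fun _ : Idx m => G) E) (HBc : is_cont_ml B) (f : nat -> nat) :
  ctT (fun x : Idx m -> G => B (fun i => natof (vzero G) x (f (proj1_sig i)))).
Proof.
  intros x eps He. destruct (HBc (fun i => natof (vzero G) x (f (proj1_sig i))) eps He) as [d [Hd Hy]].
  exists d; split; auto. intros y Hyd. apply Hy. intro j. unfold natof.
  destruct lt_dec; auto. rewrite (vsub_self HG), (vnorm_0 HG); auto.
Qed.

Lemma Spol_cont (B : MLmap (fun _ : Idx m => G) E) (HB : is_multilinear B) (HBc : is_cont_ml B) :
  is_cont_ml (Spol B).
Proof.
  assert (Spol B = fun x => vscal (Kr k (/ (2 ^ m * INR (fact m))))
    (Fsum m m (fun f => vscal (Kr k (kap m f)) (B (fun i => natof (vzero G) x (f (proj1_sig i))))))).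
  { apply functional_extensionality. intro x. apply (Spol_expand HG HE B HB). }
  rewrite H. assert (Hc : ctT (fun x : Idx m -> G => vscal (Kr k (/ (2 ^ m * INR (fact m))))
    (Fsum m m (fun f => vscal (Kr k (kap m f)) (B (fun i => natof (vzero G) x (f (proj1_sig i)))))))).
  { apply ct_scal. apply ct_Fsum. intro f. apply ct_scal. apply ct_Bf; auto. }
  exact Hc.
Qed.

End Cont.

Section QB.
Context {k : fkind} {m : nat} {G E : Space k} (HG : Banach G) (HE : Banach E).
Context (B : MLmap (fun _ : Idx m => G) E) (HB : is_multilinear B) (HBc : is_cont_ml B) (Hm : (1 <= m)%nat).

Lemma Q_bounded : exists M, forall y, vnorm y <= 1 -> vnorm (B (fun _ => y)) <= M.
Proof.
  destruct (HBc (fun _ => vzero G) 1 Rlt_0_1) as [d [Hd Hc]].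
  set (s := d / 2). assert (Hs : 0 < s) by (unfold s; lra).
  exists (/ (s ^ m)). intros y Hy.
  specialize (Hc (fun _ => vscal (Kr k s) y)).
  rewrite (ml_homog HG HE B HB), (ml_zero_arg HG HE B HB Hm), (vsub_0 HE), (vnorm_scal HE) in Hc.
  rewrite <- Kr_pow, Kabs_Kr, Rabs_right in Hc by (apply Rle_ge, pow_le; lra).
  assert (0 < s ^ m) by (apply pow_lt; auto).
  assert (s ^ m * vnorm (B (fun _ => y)) < 1).
  { apply Hc. intro j. rewrite (vsub_0 HG), (vnorm_scal HG), Kabs_Kr, Rabs_right by lra.
    unfold s. pose proof (vnorm_ge0 HG y). nra. }
  apply Rmult_le_reg_l with (s ^ m); auto. rewrite Rinv_r by lra. lra.
Qed.

Lemma pnorm_ge0 : 0 <= pnorm (fun y : G => B (fun _ => y)).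
Proof. apply Rsup_ge0. intros r [x [_ ->]]. apply (vnorm_ge0 HE). Qed.

Lemma Q_pnorm y : vnorm (B (fun _ => y)) <= pnorm (fun y : G => B (fun _ => y)) * (vnorm y) ^ m.
Proof.
  destruct Q_bounded as [M HM].
  destruct (Req_dec (vnorm y) 0) as [H0|H0].
  - apply (vnorm_eq0 HG) in H0. subst y. rewrite (ml_zero_arg HG HE B HB Hm), (vnorm_0 HE), (vnorm_0 HG).
    rewrite pow_i by lia. lra.
  - pose proof (vnorm_ge0 HG y). set (ny := vnorm y) in *.
    assert (Hny : 0 < ny) by lra.
    set (y' := vscal (Kr k (/ ny)) y).
    assert (vnorm y' = 1).
    { unfold y'. rewrite (vnorm_scal HG), Kabs_Kr, Rabs_right. unfold ny; field; auto.
      apply Rle_ge; left; apply Rinv_0_lt_compat; auto. }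
    assert (vnorm (B (fun _ => y')) <= pnorm (fun y : G => B (fun _ => y))).
    { apply Rsup_ub. exists M. intros r [x [Hx ->]]. apply HM; auto. exists y'. split; auto. lra. }
    unfold y' in H2. rewrite (ml_homog HG HE B HB), (vnorm_scal HE), <- Kr_pow, Kabs_Kr in H2.
    rewrite Rabs_right in H2 by (apply Rle_ge, pow_le; left; apply Rinv_0_lt_compat; auto).
    rewrite pow_inv in H2. assert (0 < ny ^ m) by (apply pow_lt; auto).
    apply Rmult_le_compat_l with (r := ny ^ m) in H2; [|lra].
    rewrite <- Rmult_assoc, Rinv_r, Rmult_1_l in H2 by lra. lra.
Qed.

Lemma Cmm_ge0 : 0 <= Cmm m.
Proof. unfold Cmm. apply Rmult_le_pos. apply pow_le, pos_INR. left; apply Rinv_0_lt_compat, INR_fact_lt_0. Qed.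

Lemma Spol_bound (x : Idx m -> G) : (forall j, vnorm (x j) <= 1) ->
  vnorm (Spol B x) <= Cmm m * pnorm (fun y : G => B (fun _ => y)).
Proof.
  intro Hx. unfold Spol. rewrite (vnorm_scal HE), Kabs_Kr.
  assert (Hc : 0 < 2 ^ m * INR (fact m)) by (apply Rmult_lt_0_compat; [apply pow_lt; lra| apply INR_fact_lt_0]).
  rewrite Rabs_right by (apply Rle_ge; left; apply Rinv_0_lt_compat; auto).
  pose proof pnorm_ge0 as Hp.
  assert (vnorm (Dv m (fun e => B (fun _ => Ve e x))) <= 2 ^ m * (pnorm (fun y : G => B (fun _ => y)) * INR m ^ m)).
  { apply (Dv_bound HE). intros e He. eapply Rle_trans. apply Q_pnorm.
    apply Rmult_le_compat_l; auto. apply pow_incr. split. apply (vnorm_ge0 HG).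
    unfold Ve. rewrite <- (Rmult_1_r (INR m)). apply (vsumn_norm_le HG). intros l Hl.
    rewrite (vnorm_scal HG), Kabs_Kr.
    assert (Rabs (e l) = 1) as -> by (destruct (He l) as [-> | ->]; unfold Rabs; destruct Rcase_abs; lra).
    rewrite Rmult_1_l; unfold natof; destruct lt_dec; auto; rewrite (vnorm_0 HG); lra. }
  apply Rle_trans with (/ (2 ^ m * INR (fact m)) * (2 ^ m * (pnorm (fun y : G => B (fun _ => y)) * INR m ^ m))).
  apply Rmult_le_compat_l; auto. left; apply Rinv_0_lt_compat; auto.
  right. unfold Cmm. field. split. apply INR_fact_neq_0. apply pow_nonzero; lra.
Qed.

Lemma Spol_mlnorm : mlnorm (Spol B) <= Cmm m * pnorm (fun y : G => B (fun _ => y)).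
Proof.
  apply Rsup_le. intros r [x [Hx ->]]. apply Spol_bound; auto.
  apply Rmult_le_pos. apply Cmm_ge0. apply pnorm_ge0.
Qed.

End QB.

Section Rpow.
Context (p : R) (Hp : 0 < p).

Lemma rpow_ge0 x : 0 <= rpow x p.
Proof. unfold rpow. destruct Rle_dec; [lra|]. left. apply exp_pos. Qed.

Lemma rpow_0 : rpow 0 p = 0.
Proof. unfold rpow. destruct Rle_dec; lra. Qed.

Lemma rpow_pos x : 0 < x -> 0 < rpow x p.
Proof. intro. unfold rpow. destruct Rle_dec; [lra|]. apply exp_pos. Qed.

Lemma rpow_lt x y : 0 <= x -> x < y -> rpow x p < rpow y p.
Proof.
  intros Hx Hxy. destruct (Req_dec x 0). subst. rewrite rpow_0. apply rpow_pos; auto.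
  unfold rpow. destruct Rle_dec; [lra|]. destruct Rle_dec; [lra|]. apply Rlt_Rpower_l; lra.
Qed.

Lemma rpow_le x y : 0 <= x -> x <= y -> rpow x p <= rpow y p.
Proof. intros Hx [H|H]. left; apply rpow_lt; auto. subst; lra. Qed.

Lemma rpow_surj t : 0 < t -> exists y, 0 < y /\ rpow y p = t.
Proof.
  intro Ht. exists (Rpower t (/ p)). split. apply exp_pos.
  unfold rpow. destruct Rle_dec. pose proof (exp_pos (/ p * ln t)). unfold Rpower in r. lra.
  rewrite Rpower_mult, Rinv_l, Rpower_1; lra.
Qed.

Lemma rpow_lt_inv x y : 0 <= x -> 0 <= y -> rpow x p < rpow y p -> x < y.
Proof.
  intros Hx Hy H. destruct (Rlt_le_dec x y); auto. pose proof (rpow_le y x Hy r). lra.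
Qed.

Lemma rpow_rcont x d : 0 <= x -> 0 < d -> exists e, 0 < e /\ rpow (x + e) p = rpow x p + d.
Proof.
  intros Hx Hd. destruct (rpow_surj (rpow x p + d)) as [y [Hy Hyr]]. pose proof (rpow_ge0 x); lra.
  exists (y - x). split. apply Rlt_Rminus. apply rpow_lt_inv; auto; lra.
  replace (x + (y - x)) with y by ring. auto.
Qed.

End Rpow.

Lemma le_eps x y : (forall eps, 0 < eps -> x <= y + eps) -> x <= y.
Proof.
  intro H. apply Rnot_lt_le. intro Hlt. specialize (H ((x - y) / 2)). lra.
Qed.

Section PHc.
Context {k : fkind} (p : R) (Hp : 0 < p) (HM : MLclass k) (HN : MLclassNorm k).
Context {n : nat} {E F : Space k} (HE : Banach E) (HF : Banach F).
Context (Hps : pnormed_subspace ml_zero ml_add ml_scal (HM n (fun _ : Idx n => E) F) (HN n (fun _ : Idx n => E) F) p).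

Definition rep (P : E -> F) (A : MLmap (fun _ : Idx n => E) F) :=
  HM n (fun _ => E) F A /\ forall x, P x = A (fun _ => x).

Lemma HN_ge0 A : HM n (fun _ => E) F A -> 0 <= HN n (fun _ => E) F A.
Proof. destruct Hps as (_&_&_&H&_). auto. Qed.

Lemma PHn_ge0 P : 0 <= PHnorm HM HN n E F P.
Proof. apply Rinf_ge0. intros y [A [HA [_ ->]]]. apply HN_ge0; auto. Qed.

Lemma PHn_le P A : rep P A -> PHnorm HM HN n E F P <= HN n (fun _ => E) F A.
Proof. intros [HA HP]. apply Rinf_le. intros y [B [HB [_ ->]]]. apply HN_ge0; auto. exists A; auto. Qed.

Lemma PHn_glb P c : PH HM n E F P -> (forall A, rep P A -> c <= HN n (fun _ => E) F A) -> c <= PHnorm HM HN n E F P.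
Proof.
  intros [A [HA HP]] H. apply Rinf_ge. intros y [B [HB [HBP ->]]]. apply H; split; auto.
  exists (HN n (fun _ => E) F A). exists A; auto.
Qed.

Lemma PHn_approx P eps : PH HM n E F P -> 0 < eps -> exists A, rep P A /\ HN n (fun _ => E) F A < PHnorm HM HN n E F P + eps.
Proof.
  intros [A0 [HA0 HP0]] He. destruct (Rinf_approx (fun r => exists A, HM n (fun _ => E) F A /\ (forall x, P x = A (fun _ => x)) /\
    r = HN n (fun _ => E) F A) eps) as [r [[A [HA [HP ->]]] Hr]]; auto.
  intros y [B [HB [_ ->]]]. apply HN_ge0; auto. exists (HN n (fun _ => E) F A0), A0; auto.
  exists A; split; auto. split; auto.
Qed.

Lemma HN_zero : HN n (fun _ => E) F ml_zero = 0.
Proof. destruct Hps as (H0&_&_&_&Hd&_). apply Hd; auto. Qed.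

Lemma PH_zero : PH HM n E F fn_zero.
Proof. destruct Hps as (H0&_). exists ml_zero; split; auto. Qed.

Lemma PHn_zero : PHnorm HM HN n E F fn_zero = 0.
Proof.
  apply Rle_antisym. rewrite <- HN_zero. apply PHn_le. split; auto. apply Hps. auto.
  apply PHn_ge0.
Qed.

Lemma PH_add P Q : PH HM n E F P -> PH HM n E F Q -> PH HM n E F (fn_add P Q).
Proof.
  intros [A [HA HPA]] [B [HB HQB]]. exists (ml_add A B). split. apply Hps; auto.
  intro x. unfold fn_add, ml_add. rewrite HPA, HQB. auto.
Qed.

Lemma PH_scal a P : PH HM n E F P -> PH HM n E F (fn_scal a P).
Proof.
  intros [A [HA HPA]]. exists (ml_scal a A). split. apply Hps; auto.
  intro x. unfold fn_scal, ml_scal. rewrite HPA. auto.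
Qed.

Lemma PHn_scal_le a P : a <> Kzero k -> PH HM n E F P ->
  PHnorm HM HN n E F (fn_scal a P) <= Kabs a * PHnorm HM HN n E F P.
Proof.
  intros Ha HP.
  assert (Hpos : 0 < Kabs a).
  { destruct (Kabs_ge0 k a) as [H|H]; auto. exfalso; apply Ha, Kabs_zero_eq; auto. }
  assert (PHnorm HM HN n E F (fn_scal a P) / Kabs a <= PHnorm HM HN n E F P).
  { apply PHn_glb; auto. intros A [HA HPA].
    assert (PHnorm HM HN n E F (fn_scal a P) <= HN n (fun _ => E) F (ml_scal a A)).
    { apply PHn_le. split. apply Hps; auto. intro x. unfold fn_scal, ml_scal. rewrite HPA; auto. }
    destruct Hps as (_&_&_&_&_&Hh&_). rewrite Hh in H by auto.
    apply Rmult_le_reg_l with (Kabs a); auto. unfold Rdiv. rewrite <- Rmult_assoc.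
    rewrite (Rmult_comm (Kabs a)), Rmult_assoc, Rinv_r, Rmult_1_r; lra. }
  unfold Rdiv in H. apply Rmult_le_compat_l with (r := Kabs a) in H; [|lra].
  rewrite (Rmult_comm (PHnorm _ _ _ _ _ _)), <- Rmult_assoc, Rinv_r, Rmult_1_l in H; lra.
Qed.

Lemma fn_scal_0 (P : E -> F) : fn_scal (Kzero k) P = fn_zero.
Proof. apply functional_extensionality. intro x. unfold fn_scal, fn_zero. apply (vscal_0 HF). Qed.

Lemma PHn_scal a P : PH HM n E F P -> PHnorm HM HN n E F (fn_scal a P) = Kabs a * PHnorm HM HN n E F P.
Proof.
  intro HP. destruct (ClassicalEpsilon.excluded_middle_informative (a = Kzero k)) as [Ha|Ha].
  - subst. rewrite fn_scal_0, PHn_zero, Kabs_0. ring.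
  - apply Rle_antisym. apply PHn_scal_le; auto.
    assert (Hi : Kinv k a <> Kzero k).
    { intro H. pose proof (Kinv_r k a Ha). rewrite H, Kmul_comm, Kmul_0_l in H0.
      pose proof (Kabs_1 k). rewrite <- H0, Kabs_0 in H1. lra. }
    pose proof (PHn_scal_le (Kinv k a) (fn_scal a P) Hi (PH_scal a P HP)).
    replace (fn_scal (Kinv k a) (fn_scal a P)) with P in H.
    + apply Rmult_le_compat_l with (r := Kabs a) in H; [|apply Kabs_ge0].
      rewrite <- Rmult_assoc, (Rmult_comm (Kabs a) (Kabs (Kinv k a))), Kabs_inv, Rmult_1_l in H; auto.
    + apply functional_extensionality. intro x. unfold fn_scal. rewrite (vscal_assoc HF).
      rewrite Kmul_comm, Kinv_r, (vscal_1 HF); auto.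
Qed.

Lemma PHn_ptriang P Q : PH HM n E F P -> PH HM n E F Q ->
  rpow (PHnorm HM HN n E F (fn_add P Q)) p <= rpow (PHnorm HM HN n E F P) p + rpow (PHnorm HM HN n E F Q) p.
Proof.
  intros HP HQ. apply le_eps. intros d Hd.
  destruct (rpow_rcont p Hp (PHnorm HM HN n E F P) (d/2)) as [e1 [He1 Hr1]]; [apply PHn_ge0|lra|].
  destruct (rpow_rcont p Hp (PHnorm HM HN n E F Q) (d/2)) as [e2 [He2 Hr2]]; [apply PHn_ge0|lra|].
  destruct (PHn_approx P e1 HP He1) as [A [[HA HPA] HAn]].
  destruct (PHn_approx Q e2 HQ He2) as [B [[HB HQB] HBn]].
  assert (rpow (PHnorm HM HN n E F (fn_add P Q)) p <= rpow (HN n (fun _ => E) F (ml_add A B)) p).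
  { apply rpow_le; auto. apply PHn_ge0. apply PHn_le. split. apply Hps; auto.
    intro x. unfold fn_add, ml_add. rewrite HPA, HQB; auto. }
  assert (rpow (HN n (fun _ => E) F A) p <= rpow (PHnorm HM HN n E F P + e1) p) by (apply rpow_le; [exact Hp|apply HN_ge0; auto|lra]).
  assert (rpow (HN n (fun _ => E) F B) p <= rpow (PHnorm HM HN n E F Q + e2) p) by (apply rpow_le; [exact Hp|apply HN_ge0; auto|lra]).
  pose proof Hps as Hps'. destruct Hps' as (_&_&_&_&_&_&Ht). specialize (Ht A B HA HB).
  lra.
Qed.

End PHc.

Lemma psum_const m n : psum (fun _ => m) n = (m * n)%nat.
Proof. induction n; simpl; lia. Qed.

Lemma iprod_constR n c : iprod 1 Rmult (fun _ : Idx n => c) = c ^ n.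
Proof. induction n; simpl; auto. rewrite IHn. ring. Qed.

Lemma opnorm_ge0 {k} {E F : Space k} (HF : Banach F) (t : E -> F) : 0 <= opnorm t.
Proof. apply Rsup_ge0. intros r [x [_ ->]]. apply (vnorm_ge0 HF). Qed.

Lemma mlnorm_ge0 {k n} {Es : Idx n -> Space k} {F : Space k} (HF : Banach F) (A : MLmap Es F) : 0 <= mlnorm A.
Proof. apply Rsup_ge0. intros r [x [_ ->]]. apply (vnorm_ge0 HF). Qed.

Lemma clin_id {k} {F : Space k} : clin (fun x : F => x).
Proof.
  split. intros x y a. reflexivity.
  intros x eps He. exists eps. split; auto.
Qed.

Lemma transp_eq {X : Type} (Pr : X -> Prop) (a b : X) : Pr a -> a = b -> Pr b.
Proof. intros H ->; auto. Qed.

Section Main.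
Context {k : fkind} (p : R) (Hp : 0 < p) (HM : MLclass k) (HN : MLclassNorm k).
Context (Hml : is_pnormed_ml_hyper_ideal k p HM HN).

Lemma comp_of n E F (Hn : (1 <= n)%nat) (HE : Banach E) (HF : Banach F) :
     (forall A, HM n (fun _ : Idx n => E) F A -> cml A) /\
     (forall A, finite_type_ml A -> HM n (fun _ : Idx n => E) F A) /\
     pnormed_subspace ml_zero ml_add ml_scal (HM n (fun _ => E) F) (HN n (fun _ => E) F) p.
Proof. destruct Hml as [H1 _]. apply H1; auto. Qed.

Lemma PHn_def n E F (Hn : (1 <= n)%nat) (HE : Banach E) (HF : Banach F) P :
  PH HM n E F P -> PHnorm HM HN n E F P = 0 -> P = fn_zero.
Proof.
  intros HP H0. destruct (comp_of n E F Hn HE HF) as (Hcml & _ & Hps).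
  apply functional_extensionality. intro x0. unfold fn_zero.
  apply NNPP. intro Hne.
  destruct Hml as [H1 [_ H3]].
  set (i0 := exist (fun l => (l < 1)%nat) 0%nat Nat.lt_0_1 : Idx 1).
  set (B0 := (fun lam => vscal (lam i0) x0) : MLmap (fun _ : Idx 1 => Kspace k) E).
  assert (HB0 : cml B0).
  { split.
    - intros i x y z a Hj Hi. unfold B0. replace i0 with i by (apply idx_eq; destruct i; simpl; lia).
      rewrite Hi. simpl. rewrite (vscal_adds HE), (vscal_assoc HE). auto.
    - intros x eps He. exists (eps / (vnorm x0 + 1)). pose proof (vnorm_ge0 HE x0).
      split. apply Rdiv_lt_0_compat; lra. intros y Hy. unfold B0.
      rewrite (vscal_subs HE), (vnorm_scal HE). specialize (Hy i0). simpl in Hy.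
      pose proof (Kabs_ge0 k (Kadd (y i0) (Kopp (x i0)))).
      apply Rle_lt_trans with ((eps / (vnorm x0 + 1)) * vnorm x0). apply Rmult_le_compat_r; lra.
      apply Rlt_le_trans with ((eps / (vnorm x0 + 1)) * (vnorm x0 + 1)).
      apply Rmult_lt_compat_l. apply Rdiv_lt_0_compat; lra. lra. right; field; lra. }
  set (N1 := psum (fun _ => 1%nat) n).
  set (C0 := (fun y => vscal (iprod (Kone k) (@Kmul k) (fun j => y (flat (fun _ => 1%nat) n j i0))) (P x0))
        : MLmap (fun _ : Idx N1 => Kspace k) F).
  assert (Hrep : forall A, rep HM P A ->
     HM N1 (fun _ => Kspace k) F C0 /\ HN N1 (fun _ => Kspace k) F C0 <=
       opnorm (fun y : F => y) * HN n (fun _ => E) F A * iprod 1 Rmult (fun j : Idx n => mlnorm B0)).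
  { intros A [HA HPA].
    pose proof (H3 n (fun _ => 1%nat) (fun _ => E) F F (fun _ : Idx N1 => Kspace k) A (fun j => B0) (fun y => y)
       Hn (fun j _ => le_n 1) (fun _ => HE) HF HF (fun _ => Kspace_Banach k) HA (fun j => HB0) clin_id) as Hx.
    cbv zeta in Hx.
    refine (transp_eq (fun D : MLmap (fun _ : Idx N1 => Kspace k) F => HM N1 (fun _ => Kspace k) F D /\ HN N1 (fun _ => Kspace k) F D <=
       opnorm (fun y : F => y) * HN n (fun _ => E) F A * iprod 1 Rmult (fun j : Idx n => mlnorm B0)) _ C0 Hx _).
    apply functional_extensionality. intro y. unfold C0, B0. cbv beta.
    rewrite (ml_scal_all HE HF A (proj1 (Hcml A HA)) (fun j => y (flat (fun _ => 1%nat) n j i0)) (fun _ => x0)).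
    rewrite HPA. auto. }
  destruct HP as [A0 HA0].
  destruct (Hrep A0 HA0) as [HC0 _].
  assert (HN1 : (1 <= N1)%nat) by (unfold N1; rewrite psum_const; lia).
  destruct (H1 N1 (fun _ => Kspace k) F HN1 (fun _ => Kspace_Banach k) HF) as (_&_&Hps1).
  destruct Hps1 as (_&_&_&Hge&Hdef&_).
  assert (Hpos : 0 < HN N1 (fun _ => Kspace k) F C0).
  { destruct (Hge C0 HC0) as [h|h]; auto. exfalso. symmetry in h.
    apply (proj1 (Hdef C0 HC0)) in h. apply Hne.
    assert (C0 (fun _ => Kone k) = vzero F) by (rewrite h; reflexivity).
    unfold C0 in H. rewrite (iprod_const (n := n)), Kpow_Kone, (vscal_1 HF) in H. auto. }
  set (K := opnorm (fun y : F => y) * iprod 1 Rmult (fun j : Idx n => mlnorm B0)).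
  assert (HK0 : 0 <= K).
  { unfold K. apply Rmult_le_pos. apply opnorm_ge0; auto. rewrite iprod_constR. apply pow_le. apply mlnorm_ge0; auto. }
  assert (HK : 0 < K).
  { destruct HK0 as [h|h]; auto. exfalso. destruct (Hrep A0 HA0) as [_ Hb].
    replace (opnorm (fun y : F => y) * HN n (fun _ => E) F A0 * iprod 1 Rmult (fun _ : Idx n => mlnorm B0))
      with (K * HN n (fun _ => E) F A0) in Hb by (unfold K; ring).
    rewrite <- h in Hb. lra. }
  assert (HN N1 (fun _ => Kspace k) F C0 / K <= PHnorm HM HN n E F P).
  { apply (PHn_glb HM HN). exists A0; auto. intros A HA. destruct (Hrep A HA) as [_ Hb].
    replace (opnorm (fun y : F => y) * HN n (fun _ => E) F A * iprod 1 Rmult (fun _ : Idx n => mlnorm B0))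
      with (K * HN n (fun _ => E) F A) in Hb by (unfold K; ring).
    apply Rmult_le_reg_l with K; auto. unfold Rdiv. rewrite <- Rmult_assoc, (Rmult_comm K), Rmult_assoc, Rinv_r, Rmult_1_r; lra. }
  rewrite H0 in H. assert (0 < HN N1 (fun _ => Kspace k) F C0 / K) by (apply Rdiv_lt_0_compat; auto). lra.
Qed.

End Main.

Lemma transport_HM {k} (HM : MLclass k) (HN : MLclassNorm k) {G H : Space k} N1 N2 (e : N1 = N2)
  (C : MLmap (fun _ : Idx N1 => G) H) : HM N1 (fun _ => G) H C ->
  exists C' : MLmap (fun _ : Idx N2 => G) H, HM N2 (fun _ => G) H C' /\
    HN N2 (fun _ => G) H C' = HN N1 (fun _ => G) H C /\ forall x, C' (fun _ => x) = C (fun _ => x).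
Proof. intros HC. subst N2. exists C; auto. Qed.

Section Main2.
Context {k : fkind} (p : R) (Hp : 0 < p) (HM : MLclass k) (HN : MLclassNorm k).
Context (Hml : is_pnormed_ml_hyper_ideal k p HM HN).

Lemma In_finite n : finite_type_ml (In k n).
Proof.
  exists 1%nat, (fun _ _ x => x), (fun _ => Kone k). split.
  - intros l i. apply (@clin_id k (Kspace k)).
  - intro x. simpl. unfold In. rewrite Kadd_0_l, Kmul_comm, Kmul_1_l. auto.
Qed.

Lemma PHn_In n : (1 <= n)%nat -> PHnorm HM HN n (Kspace k) (Kspace k) (fun l : Kt k => Kpow l n) = 1.
Proof.
  intro Hn. pose proof (Kspace_Banach k) as HK.
  destruct (comp_of p HM HN Hml n (Kspace k) (Kspace k) Hn HK HK) as (Hcml & Hfin & Hps).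
  destruct Hml as [_ [H2 _]].
  assert (HIn : HM n (fun _ => Kspace k) (Kspace k) (In k n)) by (apply Hfin, In_finite).
  assert (Hall : forall A, @rep k HM n (Kspace k) (Kspace k) (fun l : Kt k => Kpow l n) A -> A = In k n).
  { intros A [HA HPA]. apply functional_extensionality. intro lam.
    transitivity (A (fun i => @vscal k (Kspace k) (lam i) (Kone k))).
    { f_equal. apply functional_extensionality. intro i. simpl. rewrite Kmul_comm. symmetry; apply Kmul_1_l. }
    rewrite (@ml_scal_all k n (Kspace k) (Kspace k) HK HK A (proj1 (Hcml A HA)) lam (fun _ => Kone k)).
    rewrite <- HPA, Kpow_Kone. simpl. rewrite Kmul_comm, Kmul_1_l. auto. }
  apply Rle_antisym.
  - rewrite <- (H2 n Hn). apply (PHn_le p HM HN Hps). split; auto. intro x. unfold In. symmetry. apply iprod_const.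
  - rewrite <- (H2 n Hn). apply (PHn_glb HM HN). exists (In k n). split; auto. intro x. unfold In. symmetry. apply iprod_const.
    intros A HA. rewrite (Hall A HA). lra.
Qed.

Lemma comp_main n m (E F G H : Space k) (P : E -> F) (Q : G -> E) (t : F -> H) :
  (1 <= n)%nat -> (1 <= m)%nat ->
  Banach E -> Banach F -> Banach G -> Banach H ->
  PH HM n E F P -> is_poly m Q -> clin t ->
  PH HM (m * n)%nat G H (fun x => t (P (Q x))) /\
  PHnorm HM HN (m * n)%nat G H (fun x => t (P (Q x))) <=
    (Cmm m) ^ n * opnorm t * PHnorm HM HN n E F P * (pnorm Q) ^ n.
Proof.
  intros Hn Hm HE HF HG HH HP [B [[HBm HBc] HQB]] Ht.
  assert (HQ : Q = fun y => B (fun _ => y)) by (apply functional_extensionality; auto).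
  set (S := Spol B).
  assert (HS : cml S) by (split; [apply (Spol_ml HG HE B HBm) | apply (Spol_cont HG HE B HBm HBc)]).
  assert (HSd : forall x, S (fun _ => x) = Q x) by (intro; unfold S; rewrite (Spol_diag HG HE B HBm); auto).
  assert (HSn : mlnorm S <= Cmm m * pnorm Q) by (rewrite HQ; apply (Spol_mlnorm HG HE B HBm HBc Hm)).
  assert (HSn0 : 0 <= mlnorm S) by (apply mlnorm_ge0; auto).
  destruct (comp_of p HM HN Hml n E F Hn HE HF) as (Hcml & _ & Hps).
  assert (Hmn : (1 <= m * n)%nat) by nia.
  destruct (comp_of p HM HN Hml (m * n)%nat G H Hmn HG HH) as (_ & _ & Hps2).
  destruct Hml as [_ [_ H3]].
  set (K := opnorm t * (Cmm m * pnorm Q) ^ n).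
  assert (HK : 0 <= K).
  { unfold K. apply Rmult_le_pos. apply opnorm_ge0; auto. apply pow_le. lra. }
  assert (Hrep : forall A, rep HM P A -> PH HM (m * n)%nat G H (fun x => t (P (Q x))) /\
     PHnorm HM HN (m * n)%nat G H (fun x => t (P (Q x))) <= K * HN n (fun _ => E) F A).
  { intros A [HA HPA].
    pose proof (H3 n (fun _ => m) (fun _ => E) F H (fun _ : Idx (psum (fun _ => m) n) => G) A (fun j => S) t
       Hn (fun j _ => Hm) (fun _ => HE) HF HH (fun _ => HG) HA (fun j => HS) Ht) as Hx.
    cbv zeta in Hx. destruct Hx as [HC HCn].
    destruct (transport_HM HM HN _ _ (psum_const m n) _ HC) as [C' [HC' [HNC' HC'd]]].
    assert (Hd : forall x, t (P (Q x)) = C' (fun _ => x)).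
    { intro x. rewrite HC'd. cbv beta. rewrite HPA. f_equal. f_equal. apply functional_extensionality. intro j.
      symmetry; apply HSd. }
    split. exists C'; auto.
    eapply Rle_trans. apply (PHn_le p HM HN Hps2). split; eauto.
    rewrite HNC'. eapply Rle_trans. apply HCn. rewrite iprod_constR.
    unfold K. pose proof (opnorm_ge0 HH t). pose proof (HN_ge0 p HM HN Hps A HA).
    assert (mlnorm S ^ n <= (Cmm m * pnorm Q) ^ n) by (apply pow_incr; lra).
    apply Rle_trans with (opnorm t * HN n (fun _ => E) F A * (Cmm m * pnorm Q) ^ n).
    apply Rmult_le_compat_l; [apply Rmult_le_pos; auto | auto]. right; ring. }
  destruct HP as [A0 HA0]. split. apply (Hrep A0 HA0).
  assert (Hfin : PHnorm HM HN (m * n)%nat G H (fun x => t (P (Q x))) <= K * PHnorm HM HN n E F P).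
  { destruct HK as [HK|HK].
    - assert (PHnorm HM HN (m * n)%nat G H (fun x => t (P (Q x))) / K <= PHnorm HM HN n E F P).
      { apply (PHn_glb HM HN). exists A0; auto. intros A HA. destruct (Hrep A HA) as [_ Hb].
        apply Rmult_le_reg_l with K; auto. unfold Rdiv. rewrite <- Rmult_assoc, (Rmult_comm K), Rmult_assoc, Rinv_r, Rmult_1_r; lra. }
      unfold Rdiv in H0. apply Rmult_le_compat_l with (r := K) in H0; [|lra].
      rewrite (Rmult_comm (PHnorm _ _ _ _ _ _)), <- Rmult_assoc, Rinv_r, Rmult_1_l in H0; lra.
    - destruct (Hrep A0 HA0) as [_ Hb]. rewrite <- HK in *. lra. }
  eapply Rle_trans. apply Hfin. unfold K. rewrite Rpow_mult_distr. right; ring.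
Qed.

Lemma part1 : is_pnormed_poly_hyper_ideal k p Cmm (PH HM) (PHnorm HM HN).
Proof.
  split; [|split].
  - intros n E F Hn HE HF.
    destruct (comp_of p HM HN Hml n E F Hn HE HF) as (Hcml & Hfin & Hps).
    split; [|split].
    + intros P [A [HA HPA]]. exists A. split; auto.
    + intros P [m0 [phi [y [Hphi HP]]]]. exists (fun x => vsumn m0 (fun l => vscal (iprod (Kone k) (@Kmul k) (fun i => phi l (x i))) (y l))).
      split. apply Hfin. exists m0, (fun l _ => phi l), y. split; auto.
      intro x. rewrite HP. apply vsumn_ext. intros l _. rewrite iprod_const. auto.
    + split; [apply (PH_zero p HM HN Hps)|]. split; [intros; apply (PH_add p HM HN Hps); auto|].
      split; [intros; apply (PH_scal p HM HN Hps); auto|]. split; [intros; apply (PHn_ge0 p HM HN Hps)|].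
      split; [|split].
      * intros P HP. split. apply (PHn_def p HM HN Hml n E F Hn HE HF P HP).
        intros ->. apply (PHn_zero p HM HN Hps).
      * intros a P HP. apply (PHn_scal p HM HN HF Hps); auto.
      * intros P Q HP HQ. apply (PHn_ptriang p Hp HM HN Hps); auto.
  - apply PHn_In.
  - intros n m E F G H P Q t Hn Hm HE HF HG HH HP HQ Ht. apply comp_main; auto.
Qed.

End Main2.

Lemma choice_nat {T : Type} (Pr : nat -> T -> Prop) : (forall k, exists x, Pr k x) -> exists f : nat -> T, forall k, Pr k (f k).
Proof.
  intro H. exists (fun k => proj1_sig (constructive_indefinite_description _ (H k))).
  intro k. apply (proj2_sig (constructive_indefinite_description _ (H k))).
Qed.

Lemma half_pow_small y : 0 < y -> exists N, forall n, (n >= N)%nat -> (1/2) ^ n < y.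
Proof.
  intro Hy. destruct (pow_lt_1_zero (1/2)) with (y := y) as [N HN]; auto.
  rewrite Rabs_right; lra. exists N. intros. specialize (HN n H).
  rewrite Rabs_right in HN; auto. apply Rle_ge, pow_le; lra.
Qed.

Fixpoint phiF (psi : nat -> nat) (j : nat) : nat :=
  match j with O => psi O | S j' => Nat.max (S (phiF psi j')) (psi (S j')) end.
Fixpoint AseqF {X : Type} (add : X -> X -> X) (A0 : X) (D : nat -> X) (j : nat) : X :=
  match j with O => A0 | S j' => add (AseqF add A0 D j') (D j') end.

Lemma Kopp_opp k (a : Kt k) : Kopp (Kopp a) = a.
Proof. destruct k; simpl in *; kdes; simpl; try ring; f_equal; ring. Qed.

Section Compl.
Context {k : fkind} (p : R) (Hp : 0 < p) (HM : MLclass k) (HN : MLclassNorm k).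
Context {n : nat} {E F : Space k} (HE : Banach E) (HF : Banach F).
Context (Hps : pnormed_subspace ml_zero ml_add ml_scal (HM n (fun _ : Idx n => E) F) (HN n (fun _ : Idx n => E) F) p).
Context (Hcomp : complete_subspace ml_add ml_scal (HM n (fun _ : Idx n => E) F) (HN n (fun _ : Idx n => E) F)).

Let m1 := Kopp (Kone k).
Let subP (P Q : E -> F) := fn_add P (fn_scal m1 Q).
Let subM (A B : MLmap (fun _ : Idx n => E) F) := ml_add A (ml_scal m1 B).
Let SM := HM n (fun _ : Idx n => E) F.
Let NM := HN n (fun _ : Idx n => E) F.
Let Np := PHnorm HM HN n E F.

Lemma SM_add A B : SM A -> SM B -> SM (ml_add A B).
Proof. apply Hps. Qed.
Lemma SM_scal a A : SM A -> SM (ml_scal a A).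
Proof. apply Hps. Qed.
Lemma SM_sub A B : SM A -> SM B -> SM (subM A B).
Proof. intros. apply SM_add; auto. apply SM_scal; auto. Qed.
Lemma NM_tri A B : SM A -> SM B -> rpow (NM (ml_add A B)) p <= rpow (NM A) p + rpow (NM B) p.
Proof. apply Hps. Qed.
Lemma NM_ge0 A : SM A -> 0 <= NM A.
Proof. apply Hps. Qed.

Lemma NM_sub_sym A B : SM A -> SM B -> NM (subM A B) = NM (subM B A).
Proof.
  intros HA HB. replace (subM A B) with (ml_scal m1 (subM B A)).
  destruct Hps as (_&_&_&_&_&Hh&_). rewrite Hh by (apply SM_sub; auto). unfold m1. rewrite Kabs_opp, Kabs_1. apply Rmult_1_l.
  apply functional_extensionality; intro x. unfold subM, ml_add, ml_scal, m1.
  rewrite (vscal_addv HF), (vscal_assoc HF), Kmul_opp_1, Kopp_opp.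
  rewrite (vscal_1 HF), (vadd_comm HF). auto.
Qed.

Lemma sub_diag_zero (a : F) : vadd a (vscal m1 a) = vzero F.
Proof. unfold m1. rewrite <- (vopp_scal HF). apply (vadd_opp HF). Qed.

Lemma PHcomplete : complete_subspace fn_add fn_scal (PH HM n E F) Np.
Proof.
  intros u Hu Hc. fold subP in Hc |- *.
  assert (Hrad : forall j, exists r, 0 < r /\ rpow r p = (1/2) ^ j).
  { intro j. apply rpow_surj; auto. apply pow_lt; lra. }
  destruct (choice_nat _ Hrad) as [rad Hradp].
  assert (Hpsi : forall j, exists M, forall i i', (M <= i)%nat -> (M <= i')%nat -> Np (subP (u i) (u i')) < rad j).
  { intro j. apply Hc. apply Hradp. }
  destruct (choice_nat _ Hpsi) as [psi Hpsip].
  set (phi := phiF psi).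
  assert (Hphi1 : forall j, (phi j < phi (S j))%nat).
  { intro j. unfold phi. cbn [phiF]. pose proof (Nat.le_max_l (S (phiF psi j)) (psi (S j))). lia. }
  assert (Hphi2 : forall j, (psi j <= phi j)%nat) by (intro j; unfold phi; destruct j; cbn [phiF]; [lia| apply Nat.le_max_r]).
  assert (Hphimono : forall j j', (j <= j')%nat -> (phi j <= phi j')%nat).
  { intros j j' H. induction H; auto. specialize (Hphi1 m). lia. }
  assert (Hphiid : forall j, (j <= phi j)%nat).
  { induction j. lia. specialize (Hphi1 j). lia. }
  assert (HD : forall j, exists D, rep HM (subP (u (phi (S j))) (u (phi j))) D /\ NM D < rad j).
  { intro j. assert (HPd : PH HM n E F (subP (u (phi (S j))) (u (phi j)))).
    { apply (PH_add p HM HN Hps); auto. apply (PH_scal p HM HN Hps); auto. }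
    assert (Hlt : Np (subP (u (phi (S j))) (u (phi j))) < rad j).
    { apply Hpsip. pose proof (Hphi2 j); pose proof (Hphi1 j); lia. apply Hphi2. }
    destruct (PHn_approx p HM HN Hps _ (rad j - Np (subP (u (phi (S j))) (u (phi j)))) HPd) as [D [HDr HDn]]. lra.
    exists D. split; auto. unfold NM, Np in *. lra. }
  destruct (choice_nat _ HD) as [D HDp].
  destruct (Hu (phi O)) as [A0 HA0].
  set (Aseq := AseqF ml_add A0 D).
  assert (HArep : forall j, rep HM (u (phi j)) (Aseq j)).
  { induction j.
    - simpl. apply HA0.
    - destruct IHj as [HAj HPj]. destruct (HDp j) as [[HDj HPDj] _]. split.
      + change (Aseq (S j)) with (ml_add (Aseq j) (D j)). apply SM_add; auto.
      + intro x. change (Aseq (S j)) with (ml_add (Aseq j) (D j)). unfold ml_add. rewrite <- HPj, <- HPDj. unfold subP, fn_add, fn_scal.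
        rewrite (vadd_assoc HF), (vadd_comm HF (u (phi j) x)), <- (vadd_assoc HF), sub_diag_zero, (vadd_0 HF). auto. }
  assert (Hest : forall j i, (j <= i)%nat -> rpow (NM (subM (Aseq i) (Aseq j))) p <= 2 * (1/2) ^ j - 2 * (1/2) ^ i).
  { intros j i Hji. induction Hji.
    - replace (subM (Aseq j) (Aseq j)) with (@ml_zero k n (fun _ => E) F).
      destruct Hps as (H0&_&_&_&Hd&_). unfold NM. rewrite (proj2 (Hd _ H0) eq_refl), rpow_0; auto. lra.
      apply functional_extensionality; intro x. unfold subM, ml_add, ml_scal, ml_zero. rewrite sub_diag_zero. auto.
    - replace (subM (Aseq (S m)) (Aseq j)) with (ml_add (subM (Aseq m) (Aseq j)) (D m)).
      + eapply Rle_trans. apply NM_tri. apply SM_sub; apply HArep. apply (HDp m).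
        destruct (HDp m) as [[HDm _] HDn].
        assert (rpow (NM (D m)) p <= (1/2) ^ m).
        { rewrite <- (proj2 (Hradp m)). apply rpow_le; auto. apply NM_ge0; auto. lra. }
        rewrite <- tech_pow_Rmult. lra.
      + apply functional_extensionality; intro x. change (Aseq (S m)) with (ml_add (Aseq m) (D m)). unfold subM, ml_add, ml_scal.
        rewrite <- !(vadd_assoc HF). f_equal. apply (vadd_comm HF). }
  assert (HAc : forall eps, 0 < eps -> exists M, forall i j, (M <= i)%nat -> (M <= j)%nat ->
      NM (ml_add (Aseq i) (ml_scal (Kopp (Kone k)) (Aseq j))) < eps).
  { intros eps He. destruct (half_pow_small (rpow eps p / 2)) as [M HM0].
    apply Rdiv_lt_0_compat; [apply rpow_pos; auto|lra].
    exists M. intros i j Hi Hj. fold m1. fold (subM (Aseq i) (Aseq j)).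
    assert (Hgen : forall a b, (M <= b)%nat -> (b <= a)%nat -> NM (subM (Aseq a) (Aseq b)) < eps).
    { intros a b Hb Hba. apply (rpow_lt_inv p Hp). apply NM_ge0, SM_sub; apply HArep. lra.
      eapply Rle_lt_trans. apply Hest; auto. specialize (HM0 b Hb).
      pose proof (pow_le (1/2) a ltac:(lra)). lra. }
    destruct (Nat.le_ge_cases j i).
    - apply Hgen; auto.
    - rewrite NM_sub_sym by apply HArep. apply Hgen; auto. }
  destruct (Hcomp Aseq (fun j => proj1 (HArep j)) HAc) as [Ainf [HAinf HAconv]].
  exists (fun x => Ainf (fun _ => x)). split. exists Ainf; split; auto.
  intros eps He.
  destruct (rpow_surj p Hp (rpow eps p / 2)) as [dl [Hdl Hdlr]].
  apply Rdiv_lt_0_compat; [apply rpow_pos; auto|lra].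
  destruct (Hc dl Hdl) as [Mc HMc]. destruct (HAconv dl Hdl) as [Ma HMa].
  set (K := (Mc + Ma)%nat). exists Mc. intros i Hi.
  assert (HPK : PH HM n E F (u (phi K))) by auto.
  assert (HPinf : PH HM n E F (fun x => Ainf (fun _ => x))) by (exists Ainf; split; auto).
  assert (Hsplit : subP (u i) (fun x => Ainf (fun _ => x)) =
     fn_add (subP (u i) (u (phi K))) (subP (u (phi K)) (fun x => Ainf (fun _ => x)))).
  { apply functional_extensionality; intro x. unfold subP, fn_add, fn_scal.
    rewrite <- !(vadd_assoc HF). f_equal. rewrite (vadd_assoc HF), (vadd_comm HF (vscal m1 _)), sub_diag_zero, (vadd_0_l HF). auto. }
  assert (H1 : Np (subP (u i) (u (phi K))) < dl).
  { apply HMc; auto. pose proof (Hphiid K). unfold K in *. lia. }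
  assert (H2 : Np (subP (u (phi K)) (fun x => Ainf (fun _ => x))) < dl).
  { eapply Rle_lt_trans. apply (PHn_le p HM HN Hps). split.
    apply (SM_sub (Aseq K) Ainf); auto. apply HArep.
    intro x. unfold subP, subM, fn_add, fn_scal, ml_add, ml_scal. destruct (HArep K) as [_ HPK']. rewrite HPK'. auto.
    apply HMa. unfold K; lia. }
  assert (HP1 : PH HM n E F (subP (u i) (u (phi K)))).
  { apply (PH_add p HM HN Hps); auto. apply (PH_scal p HM HN Hps); auto. }
  assert (HP2 : PH HM n E F (subP (u (phi K)) (fun x => Ainf (fun _ => x)))).
  { apply (PH_add p HM HN Hps); auto. apply (PH_scal p HM HN Hps); auto. }
  apply (rpow_lt_inv p Hp). apply (PHn_ge0 p HM HN Hps). lra.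
  change (fn_add (u i) (fn_scal (Kopp (Kone k)) (fun x : E => Ainf (fun _ : Idx n => x)))) with (subP (u i) (fun x : E => Ainf (fun _ : Idx n => x))). rewrite Hsplit. unfold Np. eapply Rle_lt_trans. apply (PHn_ptriang p Hp HM HN Hps); auto.
  assert (rpow (Np (subP (u i) (u (phi K)))) p < rpow dl p) by (apply rpow_lt; auto; apply (PHn_ge0 p HM HN Hps)).
  assert (rpow (Np (subP (u (phi K)) (fun x => Ainf (fun _ => x)))) p < rpow dl p) by (apply rpow_lt; auto; apply (PHn_ge0 p HM HN Hps)).
  unfold Np in *. lra.
Qed.

End Compl.

Theorem mainTheorem2 (k : fkind) (p : R) (HM : MLclass k) (HN : MLclassNorm k) :
  0 < p <= 1 ->
  (is_pnormed_ml_hyper_ideal k p HM HN ->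
     is_pnormed_poly_hyper_ideal k p Cmm (PH HM) (PHnorm HM HN)) /\
  (is_pBanach_ml_hyper_ideal k p HM HN ->
     is_pBanach_poly_hyper_ideal k p Cmm (PH HM) (PHnorm HM HN)).
Proof.
  intros [Hp _]. split.
  - intro Hml. apply (part1 p Hp HM HN Hml).
  - intros [Hml Hcm]. split. apply (part1 p Hp HM HN Hml).
    intros n E F Hn HE HF.
    destruct (comp_of p HM HN Hml n E F Hn HE HF) as (_ & _ & Hps).
    apply (PHcomplete p Hp HM HN HF Hps (Hcm n (fun _ => E) F Hn (fun _ => HE) HF)).
Qed.
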